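(* Let $G$ be a group of order $3^5$ generated by $f_1,\dots,f_5$ with $f_5\in Z(G)$, satisfying the commutator relations $[f_2,f_1]=f_3$, $[f_3,f_1]=f_4$, $[f_4,f_1]=[f_3,f_2]=f_5$, $[f_4,f_2]=[f_4,f_3]=1$, together with one of the following three sets of power relations: (a) $f_1^3=f_4^3=f_5^3=1$, $f_2^3=f_4^{-1}$, $f_3^3=f_5^{-1}$; (b) $f_4^3=f_5^3=1$, $f_1^3=f_5$, $f_2^3=f_4^{-1}$, $f_3^3=f_5^{-1}$; (c) $f_4^3=f_5^3=1$, $f_1^3=f_3^3=f_5^{-1}$, $f_2^3=f_4^{-1}$. Then $B_0(G)\neq 0$. In case (a), moreover $G/[G,G]\cong C_3\times C_3$.
   Context: $[g,h]=g^{-1}h^{-1}gh$; $Z(G)$ is the center. $B_0(G)=\bigcap_A \ker\{\mathrm{res}^G_A : H^2(G,\mathbb{Q}/\mathbb{Z})\to H^2(A,\mathbb{Q}/\mathbb{Z})\}$, where $A$ runs over all bicyclic subgroups of $G$ (cyclic groups or direct products of two cyclic groups), with trivial action on $\mathbb{Q}/\mathbb{Z}$. (These are the groups numbered 28, 29, 30 among groups of order 243 in the GAP SmallGroups library.) *)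

(* Defs.v *)
From HB Require Import structures.
From mathcomp Require Import all_boot all_order all_algebra all_fingroup all_solvable.
Set Implicit Arguments. Unset Strict Implicit. Unset Printing Implicit Defensive.
Import GRing.Theory Num.Theory.

Local Open Scope group_scope.

(* Q/Z is modelled as rat modulo the integers: [eqQZ a b] means a = b in Q/Z. *)
Definition eqQZ (a b : rat) : Prop := ((a - b)%R \is a Num.int).

(* A normalised-or-not 2-cochain with values in Q/Z is a function gT -> gT -> rat
   (only its values on the relevant subgroup matter).  Trivial action. *)
Definition cocycle2 (gT : finGroupType) (G : {set gT}) (c : gT -> gT -> rat) : Prop :=
  forall x y z, x \in G -> y \in G -> z \in G ->
    eqQZ (c y z - c (x * y)%g z + c x (y * z)%g - c x y)%R 0%R.

Definition coboundary2 (gT : finGroupType) (A : {set gT}) (c : gT -> gT -> rat) : Prop :=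
  exists f : gT -> rat, forall x y, x \in A -> y \in A ->
    eqQZ (c x y) (f y - f (x * y)%g + f x)%R.

(* bicyclic subgroup: cyclic or a direct product of two cyclic groups,
   i.e. an abelian group generated by (at most) two elements. *)
Definition bicyclic (gT : finGroupType) (A : {set gT}) : Prop :=
  abelian A /\ exists x y : gT, A = <<[set x; y]>>.

(* B_0(G) <> 0: some class in H^2(G,Q/Z) is nonzero but restricts to zero on
   every bicyclic subgroup of G.  (Restriction = restriction of the cocycle.) *)
Definition B0_nontrivial (gT : finGroupType) (G : {group gT}) : Prop :=
  exists c : gT -> gT -> rat,
    [/\ cocycle2 G c, ~ coboundary2 G c &
        forall A : {group gT}, A \subset G -> bicyclic A -> coboundary2 A c].

(* Main.v *)
Require Import Defs.
From HB Require Import structures.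
From mathcomp Require Import all_boot all_order all_algebra all_fingroup all_solvable.
From mathcomp Require Import zify ring.
Set Implicit Arguments. Unset Strict Implicit. Unset Printing Implicit Defensive.
Import GRing.Theory Num.Theory.

Module Aux.

Definition tup := (nat * nat * nat * nat * nat)%type.
Fixpoint dm3 (n : nat) : nat * nat :=
  match n with 0 => (0, 0) | 1 => (0, 1) | 2 => (0, 2) | n'.+3 => let: (q, r) := dm3 n' in (q.+1, r) end.
Definition div3 n := (dm3 n).1.
Definition mod3 n := (dm3 n).2.
Arguments div3 : simpl never.
Arguments mod3 : simpl never.
Definition norm (k1 : nat) (t : tup) : tup :=
  let: (a, b, c, d, e) := t in
  (mod3 a, mod3 b, mod3 c, mod3 (d + 2 * div3 b), mod3 (e + k1 * div3 a + 2 * div3 c)).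
Definition s1 k1 (t : tup) : tup := let: (a, b, c, d, e) := t in norm k1 (a.+1, b, b + c, c + d, e + d + 'C(b, 2)).
Definition s2 k1 (t : tup) : tup := let: (a, b, c, d, e) := t in norm k1 (a, b.+1, c, d, e + c).
Definition s3 k1 (t : tup) : tup := let: (a, b, c, d, e) := t in norm k1 (a, b, c.+1, d, e).
Definition s4 k1 (t : tup) : tup := let: (a, b, c, d, e) := t in norm k1 (a, b, c, d.+1, e).
Definition s5 k1 (t : tup) : tup := let: (a, b, c, d, e) := t in norm k1 (a, b, c, d, e.+1).
Definition mG k1 (t u : tup) : tup :=
  let: (a, b, c, d, e) := u in
  iter e (s5 k1) (iter d (s4 k1) (iter c (s3 k1) (iter b (s2 k1) (iter a (s1 k1) t)))).
Definition dec (i : nat) : tup := (div3 (div3 (div3 (div3 i))), mod3 (div3 (div3 (div3 i))), mod3 (div3 (div3 i)), mod3 (div3 i), mod3 i).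
Definition enc (t : tup) : nat := let: (a, b, c, d, e) := t in a * 81 + b * 27 + c * 9 + d * 3 + e.
Definition mC k1 i j := enc (mG k1 (dec i) (dec j)).
Definition Ctab : seq (seq nat) :=
[:: [:: 0; 0; 0; 0; 0; 0; 0; 0; 0; 0; 0; 0; 0; 0; 0; 0; 0; 0; 0; 0; 0; 0; 0; 0; 0; 0; 0; 0; 0; 0; 0; 0; 0; 0; 0; 0; 0; 0; 0; 0; 0; 0; 0; 0; 0; 0; 0; 0; 0; 0; 0; 0; 0; 0; 0; 0; 0; 0; 0; 0; 0; 0; 0; 0; 0; 0; 0; 0; 0; 0; 0; 0; 0; 0; 0; 0; 0; 0; 0; 0; 0];
 [:: 0; 0; 0; 0; 0; 0; 0; 0; 0; 0; 0; 0; 0; 0; 0; 0; 0; 0; 0; 0; 0; 0; 0; 0; 0; 0; 0; 6; 6; 6; 6; 6; 6; 6; 6; 6; 6; 6; 6; 6; 6; 6; 6; 6; 6; 6; 6; 6; 6; 6; 6; 6; 6; 6; 0; 0; 0; 0; 0; 0; 0; 0; 0; 0; 0; 0; 0; 0; 0; 0; 0; 0; 0; 0; 0; 0; 0; 0; 0; 0; 0];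
 [:: 0; 0; 0; 0; 0; 0; 0; 0; 0; 0; 0; 0; 0; 0; 0; 0; 0; 0; 0; 0; 0; 0; 0; 0; 0; 0; 0; 3; 3; 3; 3; 3; 3; 3; 3; 3; 3; 3; 3; 3; 3; 3; 3; 3; 3; 3; 3; 3; 3; 3; 3; 3; 3; 3; 0; 0; 0; 0; 0; 0; 0; 0; 0; 0; 0; 0; 0; 0; 0; 0; 0; 0; 0; 0; 0; 0; 0; 0; 0; 0; 0];
 [:: 0; 0; 0; 0; 0; 0; 0; 0; 0; 0; 0; 0; 0; 0; 0; 0; 0; 0; 0; 0; 0; 0; 0; 0; 0; 0; 0; 2; 2; 2; 8; 8; 8; 8; 8; 8; 8; 8; 8; 2; 2; 2; 8; 8; 8; 8; 8; 8; 8; 8; 8; 2; 2; 2; 8; 8; 8; 8; 8; 8; 2; 2; 2; 8; 8; 8; 8; 8; 8; 2; 2; 2; 8; 8; 8; 8; 8; 8; 2; 2; 2];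
 [:: 0; 0; 0; 0; 0; 0; 0; 0; 0; 0; 0; 0; 0; 0; 0; 0; 0; 0; 0; 0; 0; 0; 0; 0; 0; 0; 0; 8; 8; 8; 5; 5; 5; 5; 5; 5; 5; 5; 5; 8; 8; 8; 5; 5; 5; 5; 5; 5; 5; 5; 5; 8; 8; 8; 8; 8; 8; 8; 8; 8; 2; 2; 2; 8; 8; 8; 8; 8; 8; 2; 2; 2; 8; 8; 8; 8; 8; 8; 2; 2; 2];
 [:: 0; 0; 0; 0; 0; 0; 0; 0; 0; 0; 0; 0; 0; 0; 0; 0; 0; 0; 0; 0; 0; 0; 0; 0; 0; 0; 0; 5; 5; 5; 2; 2; 2; 2; 2; 2; 2; 2; 2; 5; 5; 5; 2; 2; 2; 2; 2; 2; 2; 2; 2; 5; 5; 5; 8; 8; 8; 8; 8; 8; 2; 2; 2; 8; 8; 8; 8; 8; 8; 2; 2; 2; 8; 8; 8; 8; 8; 8; 2; 2; 2];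
 [:: 0; 0; 0; 0; 0; 0; 0; 0; 0; 0; 0; 0; 0; 0; 0; 0; 0; 0; 0; 0; 0; 0; 0; 0; 0; 0; 0; 1; 1; 1; 7; 7; 7; 1; 1; 1; 1; 1; 1; 1; 1; 1; 7; 7; 7; 7; 7; 7; 1; 1; 1; 1; 1; 1; 7; 7; 7; 1; 1; 1; 1; 1; 1; 7; 7; 7; 1; 1; 1; 1; 1; 1; 7; 7; 7; 1; 1; 1; 1; 1; 1];
 [:: 0; 0; 0; 0; 0; 0; 0; 0; 0; 0; 0; 0; 0; 0; 0; 0; 0; 0; 0; 0; 0; 0; 0; 0; 0; 0; 0; 7; 7; 7; 4; 4; 4; 7; 7; 7; 7; 7; 7; 7; 7; 7; 4; 4; 4; 4; 4; 4; 7; 7; 7; 7; 7; 7; 7; 7; 7; 1; 1; 1; 1; 1; 1; 7; 7; 7; 1; 1; 1; 1; 1; 1; 7; 7; 7; 1; 1; 1; 1; 1; 1];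
 [:: 0; 0; 0; 0; 0; 0; 0; 0; 0; 0; 0; 0; 0; 0; 0; 0; 0; 0; 0; 0; 0; 0; 0; 0; 0; 0; 0; 4; 4; 4; 1; 1; 1; 4; 4; 4; 4; 4; 4; 4; 4; 4; 1; 1; 1; 1; 1; 1; 4; 4; 4; 4; 4; 4; 7; 7; 7; 1; 1; 1; 1; 1; 1; 7; 7; 7; 1; 1; 1; 1; 1; 1; 7; 7; 7; 1; 1; 1; 1; 1; 1];
 [:: 0; 0; 0; 0; 0; 0; 0; 0; 0; 0; 0; 0; 0; 0; 0; 0; 0; 0; 0; 0; 0; 0; 0; 0; 0; 0; 0; 4; 4; 4; 4; 4; 4; 4; 4; 4; 4; 4; 4; 4; 4; 4; 4; 4; 4; 4; 4; 4; 4; 4; 4; 4; 4; 4; 1; 1; 1; 4; 4; 4; 4; 4; 4; 1; 1; 1; 4; 4; 4; 4; 4; 4; 1; 1; 1; 4; 4; 4; 4; 4; 4];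
 [:: 0; 0; 0; 0; 0; 0; 0; 0; 0; 0; 0; 0; 0; 0; 0; 0; 0; 0; 0; 0; 0; 0; 0; 0; 0; 0; 0; 1; 1; 1; 1; 1; 1; 1; 1; 1; 1; 1; 1; 1; 1; 1; 1; 1; 1; 1; 1; 1; 1; 1; 1; 1; 1; 1; 1; 1; 1; 4; 4; 4; 4; 4; 4; 1; 1; 1; 4; 4; 4; 4; 4; 4; 1; 1; 1; 4; 4; 4; 4; 4; 4];
 [:: 0; 0; 0; 0; 0; 0; 0; 0; 0; 0; 0; 0; 0; 0; 0; 0; 0; 0; 0; 0; 0; 0; 0; 0; 0; 0; 0; 7; 7; 7; 7; 7; 7; 7; 7; 7; 7; 7; 7; 7; 7; 7; 7; 7; 7; 7; 7; 7; 7; 7; 7; 7; 7; 7; 1; 1; 1; 4; 4; 4; 4; 4; 4; 1; 1; 1; 4; 4; 4; 4; 4; 4; 1; 1; 1; 4; 4; 4; 4; 4; 4];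
 [:: 0; 0; 0; 0; 0; 0; 0; 0; 0; 0; 0; 0; 0; 0; 0; 0; 0; 0; 0; 0; 0; 0; 0; 0; 0; 0; 0; 6; 6; 6; 3; 3; 3; 3; 3; 3; 3; 3; 3; 6; 6; 6; 3; 3; 3; 3; 3; 3; 3; 3; 3; 6; 6; 6; 3; 3; 3; 3; 3; 3; 3; 3; 3; 3; 3; 3; 3; 3; 3; 3; 3; 3; 3; 3; 3; 3; 3; 3; 3; 3; 3];
 [:: 0; 0; 0; 0; 0; 0; 0; 0; 0; 0; 0; 0; 0; 0; 0; 0; 0; 0; 0; 0; 0; 0; 0; 0; 0; 0; 0; 3; 3; 3; 0; 0; 0; 0; 0; 0; 0; 0; 0; 3; 3; 3; 0; 0; 0; 0; 0; 0; 0; 0; 0; 3; 3; 3; 3; 3; 3; 3; 3; 3; 3; 3; 3; 3; 3; 3; 3; 3; 3; 3; 3; 3; 3; 3; 3; 3; 3; 3; 3; 3; 3];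
 [:: 0; 0; 0; 0; 0; 0; 0; 0; 0; 0; 0; 0; 0; 0; 0; 0; 0; 0; 0; 0; 0; 0; 0; 0; 0; 0; 0; 0; 0; 0; 6; 6; 6; 6; 6; 6; 6; 6; 6; 0; 0; 0; 6; 6; 6; 6; 6; 6; 6; 6; 6; 0; 0; 0; 3; 3; 3; 3; 3; 3; 3; 3; 3; 3; 3; 3; 3; 3; 3; 3; 3; 3; 3; 3; 3; 3; 3; 3; 3; 3; 3];
 [:: 0; 0; 0; 0; 0; 0; 0; 0; 0; 0; 0; 0; 0; 0; 0; 0; 0; 0; 0; 0; 0; 0; 0; 0; 0; 0; 0; 5; 5; 5; 2; 2; 2; 5; 5; 5; 5; 5; 5; 5; 5; 5; 2; 2; 2; 2; 2; 2; 5; 5; 5; 5; 5; 5; 2; 2; 2; 2; 2; 2; 5; 5; 5; 2; 2; 2; 2; 2; 2; 5; 5; 5; 2; 2; 2; 2; 2; 2; 5; 5; 5];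
 [:: 0; 0; 0; 0; 0; 0; 0; 0; 0; 0; 0; 0; 0; 0; 0; 0; 0; 0; 0; 0; 0; 0; 0; 0; 0; 0; 0; 2; 2; 2; 8; 8; 8; 2; 2; 2; 2; 2; 2; 2; 2; 2; 8; 8; 8; 8; 8; 8; 2; 2; 2; 2; 2; 2; 2; 2; 2; 2; 2; 2; 5; 5; 5; 2; 2; 2; 2; 2; 2; 5; 5; 5; 2; 2; 2; 2; 2; 2; 5; 5; 5];
 [:: 0; 0; 0; 0; 0; 0; 0; 0; 0; 0; 0; 0; 0; 0; 0; 0; 0; 0; 0; 0; 0; 0; 0; 0; 0; 0; 0; 8; 8; 8; 5; 5; 5; 8; 8; 8; 8; 8; 8; 8; 8; 8; 5; 5; 5; 5; 5; 5; 8; 8; 8; 8; 8; 8; 2; 2; 2; 2; 2; 2; 5; 5; 5; 2; 2; 2; 2; 2; 2; 5; 5; 5; 2; 2; 2; 2; 2; 2; 5; 5; 5];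
 [:: 0; 0; 0; 0; 0; 0; 0; 0; 0; 0; 0; 0; 0; 0; 0; 0; 0; 0; 0; 0; 0; 0; 0; 0; 0; 0; 0; 8; 8; 8; 8; 8; 8; 8; 8; 8; 8; 8; 8; 8; 8; 8; 8; 8; 8; 8; 8; 8; 8; 8; 8; 8; 8; 8; 5; 5; 5; 5; 5; 5; 8; 8; 8; 5; 5; 5; 5; 5; 5; 8; 8; 8; 5; 5; 5; 5; 5; 5; 8; 8; 8];
 [:: 0; 0; 0; 0; 0; 0; 0; 0; 0; 0; 0; 0; 0; 0; 0; 0; 0; 0; 0; 0; 0; 0; 0; 0; 0; 0; 0; 5; 5; 5; 5; 5; 5; 5; 5; 5; 5; 5; 5; 5; 5; 5; 5; 5; 5; 5; 5; 5; 5; 5; 5; 5; 5; 5; 5; 5; 5; 5; 5; 5; 8; 8; 8; 5; 5; 5; 5; 5; 5; 8; 8; 8; 5; 5; 5; 5; 5; 5; 8; 8; 8];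
 [:: 0; 0; 0; 0; 0; 0; 0; 0; 0; 0; 0; 0; 0; 0; 0; 0; 0; 0; 0; 0; 0; 0; 0; 0; 0; 0; 0; 2; 2; 2; 2; 2; 2; 2; 2; 2; 2; 2; 2; 2; 2; 2; 2; 2; 2; 2; 2; 2; 2; 2; 2; 2; 2; 2; 5; 5; 5; 5; 5; 5; 8; 8; 8; 5; 5; 5; 5; 5; 5; 8; 8; 8; 5; 5; 5; 5; 5; 5; 8; 8; 8];
 [:: 0; 0; 0; 0; 0; 0; 0; 0; 0; 0; 0; 0; 0; 0; 0; 0; 0; 0; 0; 0; 0; 0; 0; 0; 0; 0; 0; 1; 1; 1; 7; 7; 7; 7; 7; 7; 7; 7; 7; 1; 1; 1; 7; 7; 7; 7; 7; 7; 7; 7; 7; 1; 1; 1; 4; 4; 4; 7; 7; 7; 7; 7; 7; 4; 4; 4; 7; 7; 7; 7; 7; 7; 4; 4; 4; 7; 7; 7; 7; 7; 7];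
 [:: 0; 0; 0; 0; 0; 0; 0; 0; 0; 0; 0; 0; 0; 0; 0; 0; 0; 0; 0; 0; 0; 0; 0; 0; 0; 0; 0; 7; 7; 7; 4; 4; 4; 4; 4; 4; 4; 4; 4; 7; 7; 7; 4; 4; 4; 4; 4; 4; 4; 4; 4; 7; 7; 7; 4; 4; 4; 7; 7; 7; 7; 7; 7; 4; 4; 4; 7; 7; 7; 7; 7; 7; 4; 4; 4; 7; 7; 7; 7; 7; 7];
 [:: 0; 0; 0; 0; 0; 0; 0; 0; 0; 0; 0; 0; 0; 0; 0; 0; 0; 0; 0; 0; 0; 0; 0; 0; 0; 0; 0; 4; 4; 4; 1; 1; 1; 1; 1; 1; 1; 1; 1; 4; 4; 4; 1; 1; 1; 1; 1; 1; 1; 1; 1; 4; 4; 4; 4; 4; 4; 7; 7; 7; 7; 7; 7; 4; 4; 4; 7; 7; 7; 7; 7; 7; 4; 4; 4; 7; 7; 7; 7; 7; 7];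
 [:: 0; 0; 0; 0; 0; 0; 0; 0; 0; 0; 0; 0; 0; 0; 0; 0; 0; 0; 0; 0; 0; 0; 0; 0; 0; 0; 0; 0; 0; 0; 6; 6; 6; 0; 0; 0; 0; 0; 0; 0; 0; 0; 6; 6; 6; 6; 6; 6; 0; 0; 0; 0; 0; 0; 6; 6; 6; 6; 6; 6; 6; 6; 6; 6; 6; 6; 6; 6; 6; 6; 6; 6; 6; 6; 6; 6; 6; 6; 6; 6; 6];
 [:: 0; 0; 0; 0; 0; 0; 0; 0; 0; 0; 0; 0; 0; 0; 0; 0; 0; 0; 0; 0; 0; 0; 0; 0; 0; 0; 0; 6; 6; 6; 3; 3; 3; 6; 6; 6; 6; 6; 6; 6; 6; 6; 3; 3; 3; 3; 3; 3; 6; 6; 6; 6; 6; 6; 6; 6; 6; 6; 6; 6; 6; 6; 6; 6; 6; 6; 6; 6; 6; 6; 6; 6; 6; 6; 6; 6; 6; 6; 6; 6; 6];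
 [:: 0; 0; 0; 0; 0; 0; 0; 0; 0; 0; 0; 0; 0; 0; 0; 0; 0; 0; 0; 0; 0; 0; 0; 0; 0; 0; 0; 3; 3; 3; 0; 0; 0; 3; 3; 3; 3; 3; 3; 3; 3; 3; 0; 0; 0; 0; 0; 0; 3; 3; 3; 3; 3; 3; 6; 6; 6; 6; 6; 6; 6; 6; 6; 6; 6; 6; 6; 6; 6; 6; 6; 6; 6; 6; 6; 6; 6; 6; 6; 6; 6];
 [:: 0; 0; 0; 2; 2; 2; 1; 1; 1; 4; 4; 4; 3; 3; 3; 5; 5; 5; 8; 8; 8; 7; 7; 7; 6; 6; 6; 0; 6; 3; 6; 3; 0; 6; 3; 0; 0; 6; 3; 0; 6; 3; 6; 3; 0; 0; 6; 3; 0; 6; 3; 0; 6; 3; 0; 3; 6; 1; 4; 7; 2; 5; 8; 5; 8; 2; 6; 0; 3; 7; 1; 4; 1; 4; 7; 2; 5; 8; 3; 6; 0];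
 [:: 0; 0; 0; 2; 2; 2; 1; 1; 1; 4; 4; 4; 3; 3; 3; 5; 5; 5; 8; 8; 8; 7; 7; 7; 6; 6; 6; 3; 0; 6; 0; 6; 3; 0; 6; 3; 3; 0; 6; 3; 0; 6; 0; 6; 3; 3; 0; 6; 3; 0; 6; 3; 0; 6; 3; 6; 0; 4; 7; 1; 5; 8; 2; 8; 2; 5; 0; 3; 6; 1; 4; 7; 4; 7; 1; 5; 8; 2; 6; 0; 3];
 [:: 0; 0; 0; 2; 2; 2; 1; 1; 1; 4; 4; 4; 3; 3; 3; 5; 5; 5; 8; 8; 8; 7; 7; 7; 6; 6; 6; 6; 3; 0; 3; 0; 6; 3; 0; 6; 6; 3; 0; 6; 3; 0; 3; 0; 6; 6; 3; 0; 6; 3; 0; 6; 3; 0; 6; 0; 3; 7; 1; 4; 8; 2; 5; 2; 5; 8; 3; 6; 0; 4; 7; 1; 7; 1; 4; 8; 2; 5; 0; 3; 6];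
 [:: 0; 0; 0; 8; 8; 8; 7; 7; 7; 1; 1; 1; 3; 3; 3; 2; 2; 2; 5; 5; 5; 4; 4; 4; 6; 6; 6; 3; 0; 6; 0; 6; 3; 3; 0; 6; 3; 0; 6; 3; 0; 6; 3; 0; 6; 3; 0; 6; 3; 0; 6; 6; 3; 0; 4; 7; 1; 5; 8; 2; 6; 0; 3; 0; 3; 6; 1; 4; 7; 2; 5; 8; 5; 8; 2; 6; 0; 3; 7; 1; 4];
 [:: 0; 0; 0; 8; 8; 8; 7; 7; 7; 1; 1; 1; 3; 3; 3; 2; 2; 2; 5; 5; 5; 4; 4; 4; 6; 6; 6; 6; 3; 0; 3; 0; 6; 6; 3; 0; 6; 3; 0; 6; 3; 0; 6; 3; 0; 6; 3; 0; 6; 3; 0; 0; 6; 3; 7; 1; 4; 8; 2; 5; 0; 3; 6; 3; 6; 0; 4; 7; 1; 5; 8; 2; 8; 2; 5; 0; 3; 6; 1; 4; 7];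
 [:: 0; 0; 0; 8; 8; 8; 7; 7; 7; 1; 1; 1; 3; 3; 3; 2; 2; 2; 5; 5; 5; 4; 4; 4; 6; 6; 6; 0; 6; 3; 6; 3; 0; 0; 6; 3; 0; 6; 3; 0; 6; 3; 0; 6; 3; 0; 6; 3; 0; 6; 3; 3; 0; 6; 1; 4; 7; 2; 5; 8; 3; 6; 0; 6; 0; 3; 7; 1; 4; 8; 2; 5; 2; 5; 8; 3; 6; 0; 4; 7; 1];
 [:: 0; 0; 0; 8; 8; 8; 1; 1; 1; 4; 4; 4; 3; 3; 3; 2; 2; 2; 5; 5; 5; 7; 7; 7; 6; 6; 6; 0; 6; 3; 0; 6; 3; 0; 6; 3; 0; 6; 3; 3; 0; 6; 0; 6; 3; 0; 6; 3; 3; 0; 6; 3; 0; 6; 2; 5; 8; 3; 6; 0; 4; 7; 1; 7; 1; 4; 8; 2; 5; 0; 3; 6; 3; 6; 0; 4; 7; 1; 5; 8; 2];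
 [:: 0; 0; 0; 8; 8; 8; 1; 1; 1; 4; 4; 4; 3; 3; 3; 2; 2; 2; 5; 5; 5; 7; 7; 7; 6; 6; 6; 3; 0; 6; 3; 0; 6; 3; 0; 6; 3; 0; 6; 6; 3; 0; 3; 0; 6; 3; 0; 6; 6; 3; 0; 6; 3; 0; 5; 8; 2; 6; 0; 3; 7; 1; 4; 1; 4; 7; 2; 5; 8; 3; 6; 0; 6; 0; 3; 7; 1; 4; 8; 2; 5];
 [:: 0; 0; 0; 8; 8; 8; 1; 1; 1; 4; 4; 4; 3; 3; 3; 2; 2; 2; 5; 5; 5; 7; 7; 7; 6; 6; 6; 6; 3; 0; 6; 3; 0; 6; 3; 0; 6; 3; 0; 0; 6; 3; 6; 3; 0; 6; 3; 0; 0; 6; 3; 0; 6; 3; 8; 2; 5; 0; 3; 6; 1; 4; 7; 4; 7; 1; 5; 8; 2; 6; 0; 3; 0; 3; 6; 1; 4; 7; 2; 5; 8];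
 [:: 0; 0; 0; 8; 8; 8; 1; 1; 1; 4; 4; 4; 3; 3; 3; 2; 2; 2; 5; 5; 5; 7; 7; 7; 6; 6; 6; 0; 6; 3; 6; 3; 0; 0; 6; 3; 0; 6; 3; 0; 6; 3; 0; 6; 3; 0; 6; 3; 0; 6; 3; 3; 0; 6; 7; 1; 4; 8; 2; 5; 0; 3; 6; 3; 6; 0; 4; 7; 1; 5; 8; 2; 8; 2; 5; 0; 3; 6; 1; 4; 7];
 [:: 0; 0; 0; 8; 8; 8; 1; 1; 1; 4; 4; 4; 3; 3; 3; 2; 2; 2; 5; 5; 5; 7; 7; 7; 6; 6; 6; 3; 0; 6; 0; 6; 3; 3; 0; 6; 3; 0; 6; 3; 0; 6; 3; 0; 6; 3; 0; 6; 3; 0; 6; 6; 3; 0; 1; 4; 7; 2; 5; 8; 3; 6; 0; 6; 0; 3; 7; 1; 4; 8; 2; 5; 2; 5; 8; 3; 6; 0; 4; 7; 1];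
 [:: 0; 0; 0; 8; 8; 8; 1; 1; 1; 4; 4; 4; 3; 3; 3; 2; 2; 2; 5; 5; 5; 7; 7; 7; 6; 6; 6; 6; 3; 0; 3; 0; 6; 6; 3; 0; 6; 3; 0; 6; 3; 0; 6; 3; 0; 6; 3; 0; 6; 3; 0; 0; 6; 3; 4; 7; 1; 5; 8; 2; 6; 0; 3; 0; 3; 6; 1; 4; 7; 2; 5; 8; 5; 8; 2; 6; 0; 3; 7; 1; 4];
 [:: 0; 0; 0; 2; 2; 2; 1; 1; 1; 4; 4; 4; 3; 3; 3; 5; 5; 5; 8; 8; 8; 7; 7; 7; 6; 6; 6; 6; 3; 0; 6; 3; 0; 6; 3; 0; 6; 3; 0; 0; 6; 3; 6; 3; 0; 6; 3; 0; 0; 6; 3; 0; 6; 3; 5; 8; 2; 6; 0; 3; 7; 1; 4; 1; 4; 7; 2; 5; 8; 3; 6; 0; 6; 0; 3; 7; 1; 4; 8; 2; 5];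
 [:: 0; 0; 0; 2; 2; 2; 1; 1; 1; 4; 4; 4; 3; 3; 3; 5; 5; 5; 8; 8; 8; 7; 7; 7; 6; 6; 6; 0; 6; 3; 0; 6; 3; 0; 6; 3; 0; 6; 3; 3; 0; 6; 0; 6; 3; 0; 6; 3; 3; 0; 6; 3; 0; 6; 8; 2; 5; 0; 3; 6; 1; 4; 7; 4; 7; 1; 5; 8; 2; 6; 0; 3; 0; 3; 6; 1; 4; 7; 2; 5; 8];
 [:: 0; 0; 0; 2; 2; 2; 1; 1; 1; 4; 4; 4; 3; 3; 3; 5; 5; 5; 8; 8; 8; 7; 7; 7; 6; 6; 6; 3; 0; 6; 3; 0; 6; 3; 0; 6; 3; 0; 6; 6; 3; 0; 3; 0; 6; 3; 0; 6; 6; 3; 0; 6; 3; 0; 2; 5; 8; 3; 6; 0; 4; 7; 1; 7; 1; 4; 8; 2; 5; 0; 3; 6; 3; 6; 0; 4; 7; 1; 5; 8; 2];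
 [:: 0; 0; 0; 8; 8; 8; 7; 7; 7; 1; 1; 1; 3; 3; 3; 2; 2; 2; 5; 5; 5; 4; 4; 4; 6; 6; 6; 3; 0; 6; 0; 6; 3; 0; 6; 3; 3; 0; 6; 3; 0; 6; 0; 6; 3; 3; 0; 6; 3; 0; 6; 3; 0; 6; 0; 3; 6; 1; 4; 7; 2; 5; 8; 5; 8; 2; 6; 0; 3; 7; 1; 4; 1; 4; 7; 2; 5; 8; 3; 6; 0];
 [:: 0; 0; 0; 8; 8; 8; 7; 7; 7; 1; 1; 1; 3; 3; 3; 2; 2; 2; 5; 5; 5; 4; 4; 4; 6; 6; 6; 6; 3; 0; 3; 0; 6; 3; 0; 6; 6; 3; 0; 6; 3; 0; 3; 0; 6; 6; 3; 0; 6; 3; 0; 6; 3; 0; 3; 6; 0; 4; 7; 1; 5; 8; 2; 8; 2; 5; 0; 3; 6; 1; 4; 7; 4; 7; 1; 5; 8; 2; 6; 0; 3];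
 [:: 0; 0; 0; 8; 8; 8; 7; 7; 7; 1; 1; 1; 3; 3; 3; 2; 2; 2; 5; 5; 5; 4; 4; 4; 6; 6; 6; 0; 6; 3; 6; 3; 0; 6; 3; 0; 0; 6; 3; 0; 6; 3; 6; 3; 0; 0; 6; 3; 0; 6; 3; 0; 6; 3; 6; 0; 3; 7; 1; 4; 8; 2; 5; 2; 5; 8; 3; 6; 0; 4; 7; 1; 7; 1; 4; 8; 2; 5; 0; 3; 6];
 [:: 0; 0; 0; 8; 8; 8; 7; 7; 7; 1; 1; 1; 3; 3; 3; 2; 2; 2; 5; 5; 5; 4; 4; 4; 6; 6; 6; 0; 6; 3; 0; 6; 3; 0; 6; 3; 0; 6; 3; 3; 0; 6; 0; 6; 3; 0; 6; 3; 3; 0; 6; 3; 0; 6; 5; 8; 2; 6; 0; 3; 7; 1; 4; 1; 4; 7; 2; 5; 8; 3; 6; 0; 6; 0; 3; 7; 1; 4; 8; 2; 5];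
 [:: 0; 0; 0; 8; 8; 8; 7; 7; 7; 1; 1; 1; 3; 3; 3; 2; 2; 2; 5; 5; 5; 4; 4; 4; 6; 6; 6; 3; 0; 6; 3; 0; 6; 3; 0; 6; 3; 0; 6; 6; 3; 0; 3; 0; 6; 3; 0; 6; 6; 3; 0; 6; 3; 0; 8; 2; 5; 0; 3; 6; 1; 4; 7; 4; 7; 1; 5; 8; 2; 6; 0; 3; 0; 3; 6; 1; 4; 7; 2; 5; 8];
 [:: 0; 0; 0; 8; 8; 8; 7; 7; 7; 1; 1; 1; 3; 3; 3; 2; 2; 2; 5; 5; 5; 4; 4; 4; 6; 6; 6; 6; 3; 0; 6; 3; 0; 6; 3; 0; 6; 3; 0; 0; 6; 3; 6; 3; 0; 6; 3; 0; 0; 6; 3; 0; 6; 3; 2; 5; 8; 3; 6; 0; 4; 7; 1; 7; 1; 4; 8; 2; 5; 0; 3; 6; 3; 6; 0; 4; 7; 1; 5; 8; 2];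
 [:: 0; 0; 0; 8; 8; 8; 1; 1; 1; 4; 4; 4; 3; 3; 3; 2; 2; 2; 5; 5; 5; 7; 7; 7; 6; 6; 6; 0; 6; 3; 6; 3; 0; 6; 3; 0; 0; 6; 3; 0; 6; 3; 6; 3; 0; 0; 6; 3; 0; 6; 3; 0; 6; 3; 3; 6; 0; 4; 7; 1; 5; 8; 2; 8; 2; 5; 0; 3; 6; 1; 4; 7; 4; 7; 1; 5; 8; 2; 6; 0; 3];
 [:: 0; 0; 0; 8; 8; 8; 1; 1; 1; 4; 4; 4; 3; 3; 3; 2; 2; 2; 5; 5; 5; 7; 7; 7; 6; 6; 6; 3; 0; 6; 0; 6; 3; 0; 6; 3; 3; 0; 6; 3; 0; 6; 0; 6; 3; 3; 0; 6; 3; 0; 6; 3; 0; 6; 6; 0; 3; 7; 1; 4; 8; 2; 5; 2; 5; 8; 3; 6; 0; 4; 7; 1; 7; 1; 4; 8; 2; 5; 0; 3; 6];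
 [:: 0; 0; 0; 8; 8; 8; 1; 1; 1; 4; 4; 4; 3; 3; 3; 2; 2; 2; 5; 5; 5; 7; 7; 7; 6; 6; 6; 6; 3; 0; 3; 0; 6; 3; 0; 6; 6; 3; 0; 6; 3; 0; 3; 0; 6; 6; 3; 0; 6; 3; 0; 6; 3; 0; 0; 3; 6; 1; 4; 7; 2; 5; 8; 5; 8; 2; 6; 0; 3; 7; 1; 4; 1; 4; 7; 2; 5; 8; 3; 6; 0];
 [:: 0; 0; 0; 2; 2; 2; 1; 1; 1; 4; 4; 4; 3; 3; 3; 5; 5; 5; 8; 8; 8; 7; 7; 7; 6; 6; 6; 6; 3; 0; 3; 0; 6; 6; 3; 0; 6; 3; 0; 6; 3; 0; 6; 3; 0; 6; 3; 0; 6; 3; 0; 0; 6; 3; 1; 4; 7; 2; 5; 8; 3; 6; 0; 6; 0; 3; 7; 1; 4; 8; 2; 5; 2; 5; 8; 3; 6; 0; 4; 7; 1];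
 [:: 0; 0; 0; 2; 2; 2; 1; 1; 1; 4; 4; 4; 3; 3; 3; 5; 5; 5; 8; 8; 8; 7; 7; 7; 6; 6; 6; 0; 6; 3; 6; 3; 0; 0; 6; 3; 0; 6; 3; 0; 6; 3; 0; 6; 3; 0; 6; 3; 0; 6; 3; 3; 0; 6; 4; 7; 1; 5; 8; 2; 6; 0; 3; 0; 3; 6; 1; 4; 7; 2; 5; 8; 5; 8; 2; 6; 0; 3; 7; 1; 4];
 [:: 0; 0; 0; 2; 2; 2; 1; 1; 1; 4; 4; 4; 3; 3; 3; 5; 5; 5; 8; 8; 8; 7; 7; 7; 6; 6; 6; 3; 0; 6; 0; 6; 3; 3; 0; 6; 3; 0; 6; 3; 0; 6; 3; 0; 6; 3; 0; 6; 3; 0; 6; 6; 3; 0; 7; 1; 4; 8; 2; 5; 0; 3; 6; 3; 6; 0; 4; 7; 1; 5; 8; 2; 8; 2; 5; 0; 3; 6; 1; 4; 7];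
 [:: 0; 6; 3; 8; 5; 2; 7; 4; 1; 4; 1; 7; 3; 0; 6; 2; 8; 5; 8; 5; 2; 7; 4; 1; 6; 3; 0; 0; 0; 0; 7; 7; 7; 8; 8; 8; 5; 5; 5; 6; 6; 6; 4; 4; 4; 1; 1; 1; 2; 2; 2; 3; 3; 3; 0; 3; 6; 3; 6; 0; 3; 6; 0; 0; 3; 6; 0; 3; 6; 3; 6; 0; 0; 3; 6; 0; 3; 6; 0; 3; 6];
 [:: 0; 6; 3; 8; 5; 2; 7; 4; 1; 4; 1; 7; 3; 0; 6; 2; 8; 5; 8; 5; 2; 7; 4; 1; 6; 3; 0; 0; 0; 0; 7; 7; 7; 8; 8; 8; 5; 5; 5; 6; 6; 6; 4; 4; 4; 1; 1; 1; 2; 2; 2; 3; 3; 3; 6; 0; 3; 0; 3; 6; 0; 3; 6; 6; 0; 3; 6; 0; 3; 0; 3; 6; 6; 0; 3; 6; 0; 3; 6; 0; 3];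
 [:: 0; 6; 3; 8; 5; 2; 7; 4; 1; 4; 1; 7; 3; 0; 6; 2; 8; 5; 8; 5; 2; 7; 4; 1; 6; 3; 0; 0; 0; 0; 7; 7; 7; 8; 8; 8; 5; 5; 5; 6; 6; 6; 4; 4; 4; 1; 1; 1; 2; 2; 2; 3; 3; 3; 3; 6; 0; 6; 0; 3; 6; 0; 3; 3; 6; 0; 3; 6; 0; 6; 0; 3; 3; 6; 0; 3; 6; 0; 3; 6; 0];
 [:: 0; 6; 3; 8; 5; 2; 1; 7; 4; 4; 1; 7; 3; 0; 6; 5; 2; 8; 8; 5; 2; 7; 4; 1; 0; 6; 3; 1; 1; 1; 8; 8; 8; 0; 0; 0; 6; 6; 6; 7; 7; 7; 5; 5; 5; 2; 2; 2; 3; 3; 3; 4; 4; 4; 0; 3; 6; 0; 3; 6; 0; 3; 6; 6; 0; 3; 0; 3; 6; 0; 3; 6; 6; 0; 3; 6; 0; 3; 0; 3; 6];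
 [:: 0; 6; 3; 8; 5; 2; 1; 7; 4; 4; 1; 7; 3; 0; 6; 5; 2; 8; 8; 5; 2; 7; 4; 1; 0; 6; 3; 1; 1; 1; 8; 8; 8; 0; 0; 0; 6; 6; 6; 7; 7; 7; 5; 5; 5; 2; 2; 2; 3; 3; 3; 4; 4; 4; 6; 0; 3; 6; 0; 3; 6; 0; 3; 3; 6; 0; 6; 0; 3; 6; 0; 3; 3; 6; 0; 3; 6; 0; 6; 0; 3];
 [:: 0; 6; 3; 8; 5; 2; 1; 7; 4; 4; 1; 7; 3; 0; 6; 5; 2; 8; 8; 5; 2; 7; 4; 1; 0; 6; 3; 1; 1; 1; 8; 8; 8; 0; 0; 0; 6; 6; 6; 7; 7; 7; 5; 5; 5; 2; 2; 2; 3; 3; 3; 4; 4; 4; 3; 6; 0; 3; 6; 0; 3; 6; 0; 0; 3; 6; 3; 6; 0; 3; 6; 0; 0; 3; 6; 0; 3; 6; 3; 6; 0];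
 [:: 0; 6; 3; 2; 8; 5; 1; 7; 4; 4; 1; 7; 6; 3; 0; 5; 2; 8; 8; 5; 2; 1; 7; 4; 0; 6; 3; 2; 2; 2; 0; 0; 0; 1; 1; 1; 7; 7; 7; 8; 8; 8; 6; 6; 6; 3; 3; 3; 4; 4; 4; 5; 5; 5; 6; 0; 3; 6; 0; 3; 0; 3; 6; 6; 0; 3; 6; 0; 3; 6; 0; 3; 3; 6; 0; 6; 0; 3; 6; 0; 3];
 [:: 0; 6; 3; 2; 8; 5; 1; 7; 4; 4; 1; 7; 6; 3; 0; 5; 2; 8; 8; 5; 2; 1; 7; 4; 0; 6; 3; 2; 2; 2; 0; 0; 0; 1; 1; 1; 7; 7; 7; 8; 8; 8; 6; 6; 6; 3; 3; 3; 4; 4; 4; 5; 5; 5; 3; 6; 0; 3; 6; 0; 6; 0; 3; 3; 6; 0; 3; 6; 0; 3; 6; 0; 0; 3; 6; 3; 6; 0; 3; 6; 0];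
 [:: 0; 6; 3; 2; 8; 5; 1; 7; 4; 4; 1; 7; 6; 3; 0; 5; 2; 8; 8; 5; 2; 1; 7; 4; 0; 6; 3; 2; 2; 2; 0; 0; 0; 1; 1; 1; 7; 7; 7; 8; 8; 8; 6; 6; 6; 3; 3; 3; 4; 4; 4; 5; 5; 5; 0; 3; 6; 0; 3; 6; 3; 6; 0; 0; 3; 6; 0; 3; 6; 0; 3; 6; 6; 0; 3; 0; 3; 6; 0; 3; 6];
 [:: 0; 6; 3; 8; 5; 2; 7; 4; 1; 4; 1; 7; 3; 0; 6; 2; 8; 5; 8; 5; 2; 7; 4; 1; 6; 3; 0; 6; 6; 6; 4; 4; 4; 5; 5; 5; 2; 2; 2; 3; 3; 3; 1; 1; 1; 7; 7; 7; 8; 8; 8; 0; 0; 0; 3; 6; 0; 3; 6; 0; 3; 6; 0; 0; 3; 6; 3; 6; 0; 3; 6; 0; 0; 3; 6; 0; 3; 6; 3; 6; 0];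
 [:: 0; 6; 3; 8; 5; 2; 7; 4; 1; 4; 1; 7; 3; 0; 6; 2; 8; 5; 8; 5; 2; 7; 4; 1; 6; 3; 0; 6; 6; 6; 4; 4; 4; 5; 5; 5; 2; 2; 2; 3; 3; 3; 1; 1; 1; 7; 7; 7; 8; 8; 8; 0; 0; 0; 0; 3; 6; 0; 3; 6; 0; 3; 6; 6; 0; 3; 0; 3; 6; 0; 3; 6; 6; 0; 3; 6; 0; 3; 0; 3; 6];
 [:: 0; 6; 3; 8; 5; 2; 7; 4; 1; 4; 1; 7; 3; 0; 6; 2; 8; 5; 8; 5; 2; 7; 4; 1; 6; 3; 0; 6; 6; 6; 4; 4; 4; 5; 5; 5; 2; 2; 2; 3; 3; 3; 1; 1; 1; 7; 7; 7; 8; 8; 8; 0; 0; 0; 6; 0; 3; 6; 0; 3; 6; 0; 3; 3; 6; 0; 6; 0; 3; 6; 0; 3; 3; 6; 0; 3; 6; 0; 6; 0; 3];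
 [:: 0; 6; 3; 8; 5; 2; 1; 7; 4; 4; 1; 7; 3; 0; 6; 5; 2; 8; 8; 5; 2; 7; 4; 1; 0; 6; 3; 7; 7; 7; 5; 5; 5; 6; 6; 6; 3; 3; 3; 4; 4; 4; 2; 2; 2; 8; 8; 8; 0; 0; 0; 1; 1; 1; 0; 3; 6; 0; 3; 6; 3; 6; 0; 0; 3; 6; 0; 3; 6; 0; 3; 6; 6; 0; 3; 0; 3; 6; 0; 3; 6];
 [:: 0; 6; 3; 8; 5; 2; 1; 7; 4; 4; 1; 7; 3; 0; 6; 5; 2; 8; 8; 5; 2; 7; 4; 1; 0; 6; 3; 7; 7; 7; 5; 5; 5; 6; 6; 6; 3; 3; 3; 4; 4; 4; 2; 2; 2; 8; 8; 8; 0; 0; 0; 1; 1; 1; 6; 0; 3; 6; 0; 3; 0; 3; 6; 6; 0; 3; 6; 0; 3; 6; 0; 3; 3; 6; 0; 6; 0; 3; 6; 0; 3];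
 [:: 0; 6; 3; 8; 5; 2; 1; 7; 4; 4; 1; 7; 3; 0; 6; 5; 2; 8; 8; 5; 2; 7; 4; 1; 0; 6; 3; 7; 7; 7; 5; 5; 5; 6; 6; 6; 3; 3; 3; 4; 4; 4; 2; 2; 2; 8; 8; 8; 0; 0; 0; 1; 1; 1; 3; 6; 0; 3; 6; 0; 6; 0; 3; 3; 6; 0; 3; 6; 0; 3; 6; 0; 0; 3; 6; 3; 6; 0; 3; 6; 0];
 [:: 0; 6; 3; 2; 8; 5; 1; 7; 4; 4; 1; 7; 6; 3; 0; 5; 2; 8; 8; 5; 2; 1; 7; 4; 0; 6; 3; 8; 8; 8; 6; 6; 6; 7; 7; 7; 4; 4; 4; 5; 5; 5; 3; 3; 3; 0; 0; 0; 1; 1; 1; 2; 2; 2; 6; 0; 3; 0; 3; 6; 0; 3; 6; 6; 0; 3; 6; 0; 3; 0; 3; 6; 6; 0; 3; 6; 0; 3; 6; 0; 3];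
 [:: 0; 6; 3; 2; 8; 5; 1; 7; 4; 4; 1; 7; 6; 3; 0; 5; 2; 8; 8; 5; 2; 1; 7; 4; 0; 6; 3; 8; 8; 8; 6; 6; 6; 7; 7; 7; 4; 4; 4; 5; 5; 5; 3; 3; 3; 0; 0; 0; 1; 1; 1; 2; 2; 2; 3; 6; 0; 6; 0; 3; 6; 0; 3; 3; 6; 0; 3; 6; 0; 6; 0; 3; 3; 6; 0; 3; 6; 0; 3; 6; 0];
 [:: 0; 6; 3; 2; 8; 5; 1; 7; 4; 4; 1; 7; 6; 3; 0; 5; 2; 8; 8; 5; 2; 1; 7; 4; 0; 6; 3; 8; 8; 8; 6; 6; 6; 7; 7; 7; 4; 4; 4; 5; 5; 5; 3; 3; 3; 0; 0; 0; 1; 1; 1; 2; 2; 2; 0; 3; 6; 3; 6; 0; 3; 6; 0; 0; 3; 6; 0; 3; 6; 3; 6; 0; 0; 3; 6; 0; 3; 6; 0; 3; 6];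
 [:: 0; 6; 3; 8; 5; 2; 7; 4; 1; 4; 1; 7; 3; 0; 6; 2; 8; 5; 8; 5; 2; 7; 4; 1; 6; 3; 0; 3; 3; 3; 1; 1; 1; 2; 2; 2; 8; 8; 8; 0; 0; 0; 7; 7; 7; 4; 4; 4; 5; 5; 5; 6; 6; 6; 3; 6; 0; 3; 6; 0; 6; 0; 3; 3; 6; 0; 3; 6; 0; 3; 6; 0; 0; 3; 6; 3; 6; 0; 3; 6; 0];
 [:: 0; 6; 3; 8; 5; 2; 7; 4; 1; 4; 1; 7; 3; 0; 6; 2; 8; 5; 8; 5; 2; 7; 4; 1; 6; 3; 0; 3; 3; 3; 1; 1; 1; 2; 2; 2; 8; 8; 8; 0; 0; 0; 7; 7; 7; 4; 4; 4; 5; 5; 5; 6; 6; 6; 0; 3; 6; 0; 3; 6; 3; 6; 0; 0; 3; 6; 0; 3; 6; 0; 3; 6; 6; 0; 3; 0; 3; 6; 0; 3; 6];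
 [:: 0; 6; 3; 8; 5; 2; 7; 4; 1; 4; 1; 7; 3; 0; 6; 2; 8; 5; 8; 5; 2; 7; 4; 1; 6; 3; 0; 3; 3; 3; 1; 1; 1; 2; 2; 2; 8; 8; 8; 0; 0; 0; 7; 7; 7; 4; 4; 4; 5; 5; 5; 6; 6; 6; 6; 0; 3; 6; 0; 3; 0; 3; 6; 6; 0; 3; 6; 0; 3; 6; 0; 3; 3; 6; 0; 6; 0; 3; 6; 0; 3];
 [:: 0; 6; 3; 8; 5; 2; 1; 7; 4; 4; 1; 7; 3; 0; 6; 5; 2; 8; 8; 5; 2; 7; 4; 1; 0; 6; 3; 4; 4; 4; 2; 2; 2; 3; 3; 3; 0; 0; 0; 1; 1; 1; 8; 8; 8; 5; 5; 5; 6; 6; 6; 7; 7; 7; 0; 3; 6; 3; 6; 0; 3; 6; 0; 0; 3; 6; 0; 3; 6; 3; 6; 0; 0; 3; 6; 0; 3; 6; 0; 3; 6];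
 [:: 0; 6; 3; 8; 5; 2; 1; 7; 4; 4; 1; 7; 3; 0; 6; 5; 2; 8; 8; 5; 2; 7; 4; 1; 0; 6; 3; 4; 4; 4; 2; 2; 2; 3; 3; 3; 0; 0; 0; 1; 1; 1; 8; 8; 8; 5; 5; 5; 6; 6; 6; 7; 7; 7; 6; 0; 3; 0; 3; 6; 0; 3; 6; 6; 0; 3; 6; 0; 3; 0; 3; 6; 6; 0; 3; 6; 0; 3; 6; 0; 3];
 [:: 0; 6; 3; 8; 5; 2; 1; 7; 4; 4; 1; 7; 3; 0; 6; 5; 2; 8; 8; 5; 2; 7; 4; 1; 0; 6; 3; 4; 4; 4; 2; 2; 2; 3; 3; 3; 0; 0; 0; 1; 1; 1; 8; 8; 8; 5; 5; 5; 6; 6; 6; 7; 7; 7; 3; 6; 0; 6; 0; 3; 6; 0; 3; 3; 6; 0; 3; 6; 0; 6; 0; 3; 3; 6; 0; 3; 6; 0; 3; 6; 0];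
 [:: 0; 6; 3; 2; 8; 5; 1; 7; 4; 4; 1; 7; 6; 3; 0; 5; 2; 8; 8; 5; 2; 1; 7; 4; 0; 6; 3; 5; 5; 5; 3; 3; 3; 4; 4; 4; 1; 1; 1; 2; 2; 2; 0; 0; 0; 6; 6; 6; 7; 7; 7; 8; 8; 8; 0; 3; 6; 0; 3; 6; 0; 3; 6; 6; 0; 3; 0; 3; 6; 0; 3; 6; 6; 0; 3; 6; 0; 3; 0; 3; 6];
 [:: 0; 6; 3; 2; 8; 5; 1; 7; 4; 4; 1; 7; 6; 3; 0; 5; 2; 8; 8; 5; 2; 1; 7; 4; 0; 6; 3; 5; 5; 5; 3; 3; 3; 4; 4; 4; 1; 1; 1; 2; 2; 2; 0; 0; 0; 6; 6; 6; 7; 7; 7; 8; 8; 8; 6; 0; 3; 6; 0; 3; 6; 0; 3; 3; 6; 0; 6; 0; 3; 6; 0; 3; 3; 6; 0; 3; 6; 0; 6; 0; 3];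
 [:: 0; 6; 3; 2; 8; 5; 1; 7; 4; 4; 1; 7; 6; 3; 0; 5; 2; 8; 8; 5; 2; 1; 7; 4; 0; 6; 3; 5; 5; 5; 3; 3; 3; 4; 4; 4; 1; 1; 1; 2; 2; 2; 0; 0; 0; 6; 6; 6; 7; 7; 7; 8; 8; 8; 3; 6; 0; 3; 6; 0; 3; 6; 0; 0; 3; 6; 3; 6; 0; 3; 6; 0; 0; 3; 6; 0; 3; 6; 3; 6; 0]].

Definition mQtab : seq (seq nat) :=
[:: [:: 0; 1; 2; 3; 4; 5; 6; 7; 8; 9; 10; 11; 12; 13; 14; 15; 16; 17; 18; 19; 20; 21; 22; 23; 24; 25; 26; 27; 28; 29; 30; 31; 32; 33; 34; 35; 36; 37; 38; 39; 40; 41; 42; 43; 44; 45; 46; 47; 48; 49; 50; 51; 52; 53; 54; 55; 56; 57; 58; 59; 60; 61; 62; 63; 64; 65; 66; 67; 68; 69; 70; 71; 72; 73; 74; 75; 76; 77; 78; 79; 80];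
 [:: 1; 2; 0; 4; 5; 3; 7; 8; 6; 10; 11; 9; 13; 14; 12; 16; 17; 15; 19; 20; 18; 22; 23; 21; 25; 26; 24; 28; 29; 27; 31; 32; 30; 34; 35; 33; 37; 38; 36; 40; 41; 39; 43; 44; 42; 46; 47; 45; 49; 50; 48; 52; 53; 51; 55; 56; 54; 58; 59; 57; 61; 62; 60; 64; 65; 63; 67; 68; 66; 70; 71; 69; 73; 74; 72; 76; 77; 75; 79; 80; 78];
 [:: 2; 0; 1; 5; 3; 4; 8; 6; 7; 11; 9; 10; 14; 12; 13; 17; 15; 16; 20; 18; 19; 23; 21; 22; 26; 24; 25; 29; 27; 28; 32; 30; 31; 35; 33; 34; 38; 36; 37; 41; 39; 40; 44; 42; 43; 47; 45; 46; 50; 48; 49; 53; 51; 52; 56; 54; 55; 59; 57; 58; 62; 60; 61; 65; 63; 64; 68; 66; 67; 71; 69; 70; 74; 72; 73; 77; 75; 76; 80; 78; 79];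
 [:: 3; 4; 5; 6; 7; 8; 0; 1; 2; 12; 13; 14; 15; 16; 17; 9; 10; 11; 21; 22; 23; 24; 25; 26; 18; 19; 20; 31; 32; 30; 34; 35; 33; 28; 29; 27; 40; 41; 39; 43; 44; 42; 37; 38; 36; 49; 50; 48; 52; 53; 51; 46; 47; 45; 59; 57; 58; 62; 60; 61; 56; 54; 55; 68; 66; 67; 71; 69; 70; 65; 63; 64; 77; 75; 76; 80; 78; 79; 74; 72; 73];
 [:: 4; 5; 3; 7; 8; 6; 1; 2; 0; 13; 14; 12; 16; 17; 15; 10; 11; 9; 22; 23; 21; 25; 26; 24; 19; 20; 18; 32; 30; 31; 35; 33; 34; 29; 27; 28; 41; 39; 40; 44; 42; 43; 38; 36; 37; 50; 48; 49; 53; 51; 52; 47; 45; 46; 57; 58; 59; 60; 61; 62; 54; 55; 56; 66; 67; 68; 69; 70; 71; 63; 64; 65; 75; 76; 77; 78; 79; 80; 72; 73; 74];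
 [:: 5; 3; 4; 8; 6; 7; 2; 0; 1; 14; 12; 13; 17; 15; 16; 11; 9; 10; 23; 21; 22; 26; 24; 25; 20; 18; 19; 30; 31; 32; 33; 34; 35; 27; 28; 29; 39; 40; 41; 42; 43; 44; 36; 37; 38; 48; 49; 50; 51; 52; 53; 45; 46; 47; 58; 59; 57; 61; 62; 60; 55; 56; 54; 67; 68; 66; 70; 71; 69; 64; 65; 63; 76; 77; 75; 79; 80; 78; 73; 74; 72];
 [:: 6; 7; 8; 0; 1; 2; 3; 4; 5; 15; 16; 17; 9; 10; 11; 12; 13; 14; 24; 25; 26; 18; 19; 20; 21; 22; 23; 35; 33; 34; 29; 27; 28; 32; 30; 31; 44; 42; 43; 38; 36; 37; 41; 39; 40; 53; 51; 52; 47; 45; 46; 50; 48; 49; 61; 62; 60; 55; 56; 54; 58; 59; 57; 70; 71; 69; 64; 65; 63; 67; 68; 66; 79; 80; 78; 73; 74; 72; 76; 77; 75];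
 [:: 7; 8; 6; 1; 2; 0; 4; 5; 3; 16; 17; 15; 10; 11; 9; 13; 14; 12; 25; 26; 24; 19; 20; 18; 22; 23; 21; 33; 34; 35; 27; 28; 29; 30; 31; 32; 42; 43; 44; 36; 37; 38; 39; 40; 41; 51; 52; 53; 45; 46; 47; 48; 49; 50; 62; 60; 61; 56; 54; 55; 59; 57; 58; 71; 69; 70; 65; 63; 64; 68; 66; 67; 80; 78; 79; 74; 72; 73; 77; 75; 76];
 [:: 8; 6; 7; 2; 0; 1; 5; 3; 4; 17; 15; 16; 11; 9; 10; 14; 12; 13; 26; 24; 25; 20; 18; 19; 23; 21; 22; 34; 35; 33; 28; 29; 27; 31; 32; 30; 43; 44; 42; 37; 38; 36; 40; 41; 39; 52; 53; 51; 46; 47; 45; 49; 50; 48; 60; 61; 62; 54; 55; 56; 57; 58; 59; 69; 70; 71; 63; 64; 65; 66; 67; 68; 78; 79; 80; 72; 73; 74; 75; 76; 77];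
 [:: 9; 10; 11; 12; 13; 14; 15; 16; 17; 18; 19; 20; 21; 22; 23; 24; 25; 26; 2; 0; 1; 5; 3; 4; 8; 6; 7; 39; 40; 41; 42; 43; 44; 36; 37; 38; 48; 49; 50; 51; 52; 53; 45; 46; 47; 32; 30; 31; 35; 33; 34; 29; 27; 28; 70; 71; 69; 64; 65; 63; 67; 68; 66; 79; 80; 78; 73; 74; 72; 76; 77; 75; 60; 61; 62; 54; 55; 56; 57; 58; 59];
 [:: 10; 11; 9; 13; 14; 12; 16; 17; 15; 19; 20; 18; 22; 23; 21; 25; 26; 24; 0; 1; 2; 3; 4; 5; 6; 7; 8; 40; 41; 39; 43; 44; 42; 37; 38; 36; 49; 50; 48; 52; 53; 51; 46; 47; 45; 30; 31; 32; 33; 34; 35; 27; 28; 29; 71; 69; 70; 65; 63; 64; 68; 66; 67; 80; 78; 79; 74; 72; 73; 77; 75; 76; 61; 62; 60; 55; 56; 54; 58; 59; 57];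
 [:: 11; 9; 10; 14; 12; 13; 17; 15; 16; 20; 18; 19; 23; 21; 22; 26; 24; 25; 1; 2; 0; 4; 5; 3; 7; 8; 6; 41; 39; 40; 44; 42; 43; 38; 36; 37; 50; 48; 49; 53; 51; 52; 47; 45; 46; 31; 32; 30; 34; 35; 33; 28; 29; 27; 69; 70; 71; 63; 64; 65; 66; 67; 68; 78; 79; 80; 72; 73; 74; 75; 76; 77; 62; 60; 61; 56; 54; 55; 59; 57; 58];
 [:: 12; 13; 14; 15; 16; 17; 9; 10; 11; 21; 22; 23; 24; 25; 26; 18; 19; 20; 5; 3; 4; 8; 6; 7; 2; 0; 1; 43; 44; 42; 37; 38; 36; 40; 41; 39; 52; 53; 51; 46; 47; 45; 49; 50; 48; 33; 34; 35; 27; 28; 29; 30; 31; 32; 63; 64; 65; 66; 67; 68; 69; 70; 71; 72; 73; 74; 75; 76; 77; 78; 79; 80; 56; 54; 55; 59; 57; 58; 62; 60; 61];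
 [:: 13; 14; 12; 16; 17; 15; 10; 11; 9; 22; 23; 21; 25; 26; 24; 19; 20; 18; 3; 4; 5; 6; 7; 8; 0; 1; 2; 44; 42; 43; 38; 36; 37; 41; 39; 40; 53; 51; 52; 47; 45; 46; 50; 48; 49; 34; 35; 33; 28; 29; 27; 31; 32; 30; 64; 65; 63; 67; 68; 66; 70; 71; 69; 73; 74; 72; 76; 77; 75; 79; 80; 78; 54; 55; 56; 57; 58; 59; 60; 61; 62];
 [:: 14; 12; 13; 17; 15; 16; 11; 9; 10; 23; 21; 22; 26; 24; 25; 20; 18; 19; 4; 5; 3; 7; 8; 6; 1; 2; 0; 42; 43; 44; 36; 37; 38; 39; 40; 41; 51; 52; 53; 45; 46; 47; 48; 49; 50; 35; 33; 34; 29; 27; 28; 32; 30; 31; 65; 63; 64; 68; 66; 67; 71; 69; 70; 74; 72; 73; 77; 75; 76; 80; 78; 79; 55; 56; 54; 58; 59; 57; 61; 62; 60];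
 [:: 15; 16; 17; 9; 10; 11; 12; 13; 14; 24; 25; 26; 18; 19; 20; 21; 22; 23; 8; 6; 7; 2; 0; 1; 5; 3; 4; 38; 36; 37; 41; 39; 40; 44; 42; 43; 47; 45; 46; 50; 48; 49; 53; 51; 52; 28; 29; 27; 31; 32; 30; 34; 35; 33; 68; 66; 67; 71; 69; 70; 65; 63; 64; 77; 75; 76; 80; 78; 79; 74; 72; 73; 58; 59; 57; 61; 62; 60; 55; 56; 54];
 [:: 16; 17; 15; 10; 11; 9; 13; 14; 12; 25; 26; 24; 19; 20; 18; 22; 23; 21; 6; 7; 8; 0; 1; 2; 3; 4; 5; 36; 37; 38; 39; 40; 41; 42; 43; 44; 45; 46; 47; 48; 49; 50; 51; 52; 53; 29; 27; 28; 32; 30; 31; 35; 33; 34; 66; 67; 68; 69; 70; 71; 63; 64; 65; 75; 76; 77; 78; 79; 80; 72; 73; 74; 59; 57; 58; 62; 60; 61; 56; 54; 55];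
 [:: 17; 15; 16; 11; 9; 10; 14; 12; 13; 26; 24; 25; 20; 18; 19; 23; 21; 22; 7; 8; 6; 1; 2; 0; 4; 5; 3; 37; 38; 36; 40; 41; 39; 43; 44; 42; 46; 47; 45; 49; 50; 48; 52; 53; 51; 27; 28; 29; 30; 31; 32; 33; 34; 35; 67; 68; 66; 70; 71; 69; 64; 65; 63; 76; 77; 75; 79; 80; 78; 73; 74; 72; 57; 58; 59; 60; 61; 62; 54; 55; 56];
 [:: 18; 19; 20; 21; 22; 23; 24; 25; 26; 2; 0; 1; 5; 3; 4; 8; 6; 7; 11; 9; 10; 14; 12; 13; 17; 15; 16; 51; 52; 53; 45; 46; 47; 48; 49; 50; 35; 33; 34; 29; 27; 28; 32; 30; 31; 44; 42; 43; 38; 36; 37; 41; 39; 40; 77; 75; 76; 80; 78; 79; 74; 72; 73; 58; 59; 57; 61; 62; 60; 55; 56; 54; 67; 68; 66; 70; 71; 69; 64; 65; 63];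
 [:: 19; 20; 18; 22; 23; 21; 25; 26; 24; 0; 1; 2; 3; 4; 5; 6; 7; 8; 9; 10; 11; 12; 13; 14; 15; 16; 17; 52; 53; 51; 46; 47; 45; 49; 50; 48; 33; 34; 35; 27; 28; 29; 30; 31; 32; 42; 43; 44; 36; 37; 38; 39; 40; 41; 75; 76; 77; 78; 79; 80; 72; 73; 74; 59; 57; 58; 62; 60; 61; 56; 54; 55; 68; 66; 67; 71; 69; 70; 65; 63; 64];
 [:: 20; 18; 19; 23; 21; 22; 26; 24; 25; 1; 2; 0; 4; 5; 3; 7; 8; 6; 10; 11; 9; 13; 14; 12; 16; 17; 15; 53; 51; 52; 47; 45; 46; 50; 48; 49; 34; 35; 33; 28; 29; 27; 31; 32; 30; 43; 44; 42; 37; 38; 36; 40; 41; 39; 76; 77; 75; 79; 80; 78; 73; 74; 72; 57; 58; 59; 60; 61; 62; 54; 55; 56; 66; 67; 68; 69; 70; 71; 63; 64; 65];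
 [:: 21; 22; 23; 24; 25; 26; 18; 19; 20; 5; 3; 4; 8; 6; 7; 2; 0; 1; 14; 12; 13; 17; 15; 16; 11; 9; 10; 46; 47; 45; 49; 50; 48; 52; 53; 51; 27; 28; 29; 30; 31; 32; 33; 34; 35; 36; 37; 38; 39; 40; 41; 42; 43; 44; 79; 80; 78; 73; 74; 72; 76; 77; 75; 60; 61; 62; 54; 55; 56; 57; 58; 59; 69; 70; 71; 63; 64; 65; 66; 67; 68];
 [:: 22; 23; 21; 25; 26; 24; 19; 20; 18; 3; 4; 5; 6; 7; 8; 0; 1; 2; 12; 13; 14; 15; 16; 17; 9; 10; 11; 47; 45; 46; 50; 48; 49; 53; 51; 52; 28; 29; 27; 31; 32; 30; 34; 35; 33; 37; 38; 36; 40; 41; 39; 43; 44; 42; 80; 78; 79; 74; 72; 73; 77; 75; 76; 61; 62; 60; 55; 56; 54; 58; 59; 57; 70; 71; 69; 64; 65; 63; 67; 68; 66];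
 [:: 23; 21; 22; 26; 24; 25; 20; 18; 19; 4; 5; 3; 7; 8; 6; 1; 2; 0; 13; 14; 12; 16; 17; 15; 10; 11; 9; 45; 46; 47; 48; 49; 50; 51; 52; 53; 29; 27; 28; 32; 30; 31; 35; 33; 34; 38; 36; 37; 41; 39; 40; 44; 42; 43; 78; 79; 80; 72; 73; 74; 75; 76; 77; 62; 60; 61; 56; 54; 55; 59; 57; 58; 71; 69; 70; 65; 63; 64; 68; 66; 67];
 [:: 24; 25; 26; 18; 19; 20; 21; 22; 23; 8; 6; 7; 2; 0; 1; 5; 3; 4; 17; 15; 16; 11; 9; 10; 14; 12; 13; 50; 48; 49; 53; 51; 52; 47; 45; 46; 31; 32; 30; 34; 35; 33; 28; 29; 27; 40; 41; 39; 43; 44; 42; 37; 38; 36; 72; 73; 74; 75; 76; 77; 78; 79; 80; 56; 54; 55; 59; 57; 58; 62; 60; 61; 65; 63; 64; 68; 66; 67; 71; 69; 70];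
 [:: 25; 26; 24; 19; 20; 18; 22; 23; 21; 6; 7; 8; 0; 1; 2; 3; 4; 5; 15; 16; 17; 9; 10; 11; 12; 13; 14; 48; 49; 50; 51; 52; 53; 45; 46; 47; 32; 30; 31; 35; 33; 34; 29; 27; 28; 41; 39; 40; 44; 42; 43; 38; 36; 37; 73; 74; 72; 76; 77; 75; 79; 80; 78; 54; 55; 56; 57; 58; 59; 60; 61; 62; 63; 64; 65; 66; 67; 68; 69; 70; 71];
 [:: 26; 24; 25; 20; 18; 19; 23; 21; 22; 7; 8; 6; 1; 2; 0; 4; 5; 3; 16; 17; 15; 10; 11; 9; 13; 14; 12; 49; 50; 48; 52; 53; 51; 46; 47; 45; 30; 31; 32; 33; 34; 35; 27; 28; 29; 39; 40; 41; 42; 43; 44; 36; 37; 38; 74; 72; 73; 77; 75; 76; 80; 78; 79; 55; 56; 54; 58; 59; 57; 61; 62; 60; 64; 65; 63; 67; 68; 66; 70; 71; 69];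
 [:: 27; 28; 29; 30; 31; 32; 33; 34; 35; 36; 37; 38; 39; 40; 41; 42; 43; 44; 45; 46; 47; 48; 49; 50; 51; 52; 53; 54; 55; 56; 57; 58; 59; 60; 61; 62; 63; 64; 65; 66; 67; 68; 69; 70; 71; 72; 73; 74; 75; 76; 77; 78; 79; 80; 0; 1; 2; 3; 4; 5; 6; 7; 8; 9; 10; 11; 12; 13; 14; 15; 16; 17; 18; 19; 20; 21; 22; 23; 24; 25; 26];
 [:: 28; 29; 27; 31; 32; 30; 34; 35; 33; 37; 38; 36; 40; 41; 39; 43; 44; 42; 46; 47; 45; 49; 50; 48; 52; 53; 51; 55; 56; 54; 58; 59; 57; 61; 62; 60; 64; 65; 63; 67; 68; 66; 70; 71; 69; 73; 74; 72; 76; 77; 75; 79; 80; 78; 1; 2; 0; 4; 5; 3; 7; 8; 6; 10; 11; 9; 13; 14; 12; 16; 17; 15; 19; 20; 18; 22; 23; 21; 25; 26; 24];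
 [:: 29; 27; 28; 32; 30; 31; 35; 33; 34; 38; 36; 37; 41; 39; 40; 44; 42; 43; 47; 45; 46; 50; 48; 49; 53; 51; 52; 56; 54; 55; 59; 57; 58; 62; 60; 61; 65; 63; 64; 68; 66; 67; 71; 69; 70; 74; 72; 73; 77; 75; 76; 80; 78; 79; 2; 0; 1; 5; 3; 4; 8; 6; 7; 11; 9; 10; 14; 12; 13; 17; 15; 16; 20; 18; 19; 23; 21; 22; 26; 24; 25];
 [:: 30; 31; 32; 33; 34; 35; 27; 28; 29; 39; 40; 41; 42; 43; 44; 36; 37; 38; 48; 49; 50; 51; 52; 53; 45; 46; 47; 58; 59; 57; 61; 62; 60; 55; 56; 54; 67; 68; 66; 70; 71; 69; 64; 65; 63; 76; 77; 75; 79; 80; 78; 73; 74; 72; 5; 3; 4; 8; 6; 7; 2; 0; 1; 14; 12; 13; 17; 15; 16; 11; 9; 10; 23; 21; 22; 26; 24; 25; 20; 18; 19];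
 [:: 31; 32; 30; 34; 35; 33; 28; 29; 27; 40; 41; 39; 43; 44; 42; 37; 38; 36; 49; 50; 48; 52; 53; 51; 46; 47; 45; 59; 57; 58; 62; 60; 61; 56; 54; 55; 68; 66; 67; 71; 69; 70; 65; 63; 64; 77; 75; 76; 80; 78; 79; 74; 72; 73; 3; 4; 5; 6; 7; 8; 0; 1; 2; 12; 13; 14; 15; 16; 17; 9; 10; 11; 21; 22; 23; 24; 25; 26; 18; 19; 20];
 [:: 32; 30; 31; 35; 33; 34; 29; 27; 28; 41; 39; 40; 44; 42; 43; 38; 36; 37; 50; 48; 49; 53; 51; 52; 47; 45; 46; 57; 58; 59; 60; 61; 62; 54; 55; 56; 66; 67; 68; 69; 70; 71; 63; 64; 65; 75; 76; 77; 78; 79; 80; 72; 73; 74; 4; 5; 3; 7; 8; 6; 1; 2; 0; 13; 14; 12; 16; 17; 15; 10; 11; 9; 22; 23; 21; 25; 26; 24; 19; 20; 18];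
 [:: 33; 34; 35; 27; 28; 29; 30; 31; 32; 42; 43; 44; 36; 37; 38; 39; 40; 41; 51; 52; 53; 45; 46; 47; 48; 49; 50; 62; 60; 61; 56; 54; 55; 59; 57; 58; 71; 69; 70; 65; 63; 64; 68; 66; 67; 80; 78; 79; 74; 72; 73; 77; 75; 76; 7; 8; 6; 1; 2; 0; 4; 5; 3; 16; 17; 15; 10; 11; 9; 13; 14; 12; 25; 26; 24; 19; 20; 18; 22; 23; 21];
 [:: 34; 35; 33; 28; 29; 27; 31; 32; 30; 43; 44; 42; 37; 38; 36; 40; 41; 39; 52; 53; 51; 46; 47; 45; 49; 50; 48; 60; 61; 62; 54; 55; 56; 57; 58; 59; 69; 70; 71; 63; 64; 65; 66; 67; 68; 78; 79; 80; 72; 73; 74; 75; 76; 77; 8; 6; 7; 2; 0; 1; 5; 3; 4; 17; 15; 16; 11; 9; 10; 14; 12; 13; 26; 24; 25; 20; 18; 19; 23; 21; 22];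
 [:: 35; 33; 34; 29; 27; 28; 32; 30; 31; 44; 42; 43; 38; 36; 37; 41; 39; 40; 53; 51; 52; 47; 45; 46; 50; 48; 49; 61; 62; 60; 55; 56; 54; 58; 59; 57; 70; 71; 69; 64; 65; 63; 67; 68; 66; 79; 80; 78; 73; 74; 72; 76; 77; 75; 6; 7; 8; 0; 1; 2; 3; 4; 5; 15; 16; 17; 9; 10; 11; 12; 13; 14; 24; 25; 26; 18; 19; 20; 21; 22; 23];
 [:: 36; 37; 38; 39; 40; 41; 42; 43; 44; 45; 46; 47; 48; 49; 50; 51; 52; 53; 29; 27; 28; 32; 30; 31; 35; 33; 34; 66; 67; 68; 69; 70; 71; 63; 64; 65; 75; 76; 77; 78; 79; 80; 72; 73; 74; 59; 57; 58; 62; 60; 61; 56; 54; 55; 16; 17; 15; 10; 11; 9; 13; 14; 12; 25; 26; 24; 19; 20; 18; 22; 23; 21; 6; 7; 8; 0; 1; 2; 3; 4; 5];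
 [:: 37; 38; 36; 40; 41; 39; 43; 44; 42; 46; 47; 45; 49; 50; 48; 52; 53; 51; 27; 28; 29; 30; 31; 32; 33; 34; 35; 67; 68; 66; 70; 71; 69; 64; 65; 63; 76; 77; 75; 79; 80; 78; 73; 74; 72; 57; 58; 59; 60; 61; 62; 54; 55; 56; 17; 15; 16; 11; 9; 10; 14; 12; 13; 26; 24; 25; 20; 18; 19; 23; 21; 22; 7; 8; 6; 1; 2; 0; 4; 5; 3];
 [:: 38; 36; 37; 41; 39; 40; 44; 42; 43; 47; 45; 46; 50; 48; 49; 53; 51; 52; 28; 29; 27; 31; 32; 30; 34; 35; 33; 68; 66; 67; 71; 69; 70; 65; 63; 64; 77; 75; 76; 80; 78; 79; 74; 72; 73; 58; 59; 57; 61; 62; 60; 55; 56; 54; 15; 16; 17; 9; 10; 11; 12; 13; 14; 24; 25; 26; 18; 19; 20; 21; 22; 23; 8; 6; 7; 2; 0; 1; 5; 3; 4];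
 [:: 39; 40; 41; 42; 43; 44; 36; 37; 38; 48; 49; 50; 51; 52; 53; 45; 46; 47; 32; 30; 31; 35; 33; 34; 29; 27; 28; 70; 71; 69; 64; 65; 63; 67; 68; 66; 79; 80; 78; 73; 74; 72; 76; 77; 75; 60; 61; 62; 54; 55; 56; 57; 58; 59; 9; 10; 11; 12; 13; 14; 15; 16; 17; 18; 19; 20; 21; 22; 23; 24; 25; 26; 2; 0; 1; 5; 3; 4; 8; 6; 7];
 [:: 40; 41; 39; 43; 44; 42; 37; 38; 36; 49; 50; 48; 52; 53; 51; 46; 47; 45; 30; 31; 32; 33; 34; 35; 27; 28; 29; 71; 69; 70; 65; 63; 64; 68; 66; 67; 80; 78; 79; 74; 72; 73; 77; 75; 76; 61; 62; 60; 55; 56; 54; 58; 59; 57; 10; 11; 9; 13; 14; 12; 16; 17; 15; 19; 20; 18; 22; 23; 21; 25; 26; 24; 0; 1; 2; 3; 4; 5; 6; 7; 8];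
 [:: 41; 39; 40; 44; 42; 43; 38; 36; 37; 50; 48; 49; 53; 51; 52; 47; 45; 46; 31; 32; 30; 34; 35; 33; 28; 29; 27; 69; 70; 71; 63; 64; 65; 66; 67; 68; 78; 79; 80; 72; 73; 74; 75; 76; 77; 62; 60; 61; 56; 54; 55; 59; 57; 58; 11; 9; 10; 14; 12; 13; 17; 15; 16; 20; 18; 19; 23; 21; 22; 26; 24; 25; 1; 2; 0; 4; 5; 3; 7; 8; 6];
 [:: 42; 43; 44; 36; 37; 38; 39; 40; 41; 51; 52; 53; 45; 46; 47; 48; 49; 50; 35; 33; 34; 29; 27; 28; 32; 30; 31; 65; 63; 64; 68; 66; 67; 71; 69; 70; 74; 72; 73; 77; 75; 76; 80; 78; 79; 55; 56; 54; 58; 59; 57; 61; 62; 60; 14; 12; 13; 17; 15; 16; 11; 9; 10; 23; 21; 22; 26; 24; 25; 20; 18; 19; 4; 5; 3; 7; 8; 6; 1; 2; 0];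
 [:: 43; 44; 42; 37; 38; 36; 40; 41; 39; 52; 53; 51; 46; 47; 45; 49; 50; 48; 33; 34; 35; 27; 28; 29; 30; 31; 32; 63; 64; 65; 66; 67; 68; 69; 70; 71; 72; 73; 74; 75; 76; 77; 78; 79; 80; 56; 54; 55; 59; 57; 58; 62; 60; 61; 12; 13; 14; 15; 16; 17; 9; 10; 11; 21; 22; 23; 24; 25; 26; 18; 19; 20; 5; 3; 4; 8; 6; 7; 2; 0; 1];
 [:: 44; 42; 43; 38; 36; 37; 41; 39; 40; 53; 51; 52; 47; 45; 46; 50; 48; 49; 34; 35; 33; 28; 29; 27; 31; 32; 30; 64; 65; 63; 67; 68; 66; 70; 71; 69; 73; 74; 72; 76; 77; 75; 79; 80; 78; 54; 55; 56; 57; 58; 59; 60; 61; 62; 13; 14; 12; 16; 17; 15; 10; 11; 9; 22; 23; 21; 25; 26; 24; 19; 20; 18; 3; 4; 5; 6; 7; 8; 0; 1; 2];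
 [:: 45; 46; 47; 48; 49; 50; 51; 52; 53; 29; 27; 28; 32; 30; 31; 35; 33; 34; 38; 36; 37; 41; 39; 40; 44; 42; 43; 78; 79; 80; 72; 73; 74; 75; 76; 77; 62; 60; 61; 56; 54; 55; 59; 57; 58; 71; 69; 70; 65; 63; 64; 68; 66; 67; 23; 21; 22; 26; 24; 25; 20; 18; 19; 4; 5; 3; 7; 8; 6; 1; 2; 0; 13; 14; 12; 16; 17; 15; 10; 11; 9];
 [:: 46; 47; 45; 49; 50; 48; 52; 53; 51; 27; 28; 29; 30; 31; 32; 33; 34; 35; 36; 37; 38; 39; 40; 41; 42; 43; 44; 79; 80; 78; 73; 74; 72; 76; 77; 75; 60; 61; 62; 54; 55; 56; 57; 58; 59; 69; 70; 71; 63; 64; 65; 66; 67; 68; 21; 22; 23; 24; 25; 26; 18; 19; 20; 5; 3; 4; 8; 6; 7; 2; 0; 1; 14; 12; 13; 17; 15; 16; 11; 9; 10];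
 [:: 47; 45; 46; 50; 48; 49; 53; 51; 52; 28; 29; 27; 31; 32; 30; 34; 35; 33; 37; 38; 36; 40; 41; 39; 43; 44; 42; 80; 78; 79; 74; 72; 73; 77; 75; 76; 61; 62; 60; 55; 56; 54; 58; 59; 57; 70; 71; 69; 64; 65; 63; 67; 68; 66; 22; 23; 21; 25; 26; 24; 19; 20; 18; 3; 4; 5; 6; 7; 8; 0; 1; 2; 12; 13; 14; 15; 16; 17; 9; 10; 11];
 [:: 48; 49; 50; 51; 52; 53; 45; 46; 47; 32; 30; 31; 35; 33; 34; 29; 27; 28; 41; 39; 40; 44; 42; 43; 38; 36; 37; 73; 74; 72; 76; 77; 75; 79; 80; 78; 54; 55; 56; 57; 58; 59; 60; 61; 62; 63; 64; 65; 66; 67; 68; 69; 70; 71; 25; 26; 24; 19; 20; 18; 22; 23; 21; 6; 7; 8; 0; 1; 2; 3; 4; 5; 15; 16; 17; 9; 10; 11; 12; 13; 14];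
 [:: 49; 50; 48; 52; 53; 51; 46; 47; 45; 30; 31; 32; 33; 34; 35; 27; 28; 29; 39; 40; 41; 42; 43; 44; 36; 37; 38; 74; 72; 73; 77; 75; 76; 80; 78; 79; 55; 56; 54; 58; 59; 57; 61; 62; 60; 64; 65; 63; 67; 68; 66; 70; 71; 69; 26; 24; 25; 20; 18; 19; 23; 21; 22; 7; 8; 6; 1; 2; 0; 4; 5; 3; 16; 17; 15; 10; 11; 9; 13; 14; 12];
 [:: 50; 48; 49; 53; 51; 52; 47; 45; 46; 31; 32; 30; 34; 35; 33; 28; 29; 27; 40; 41; 39; 43; 44; 42; 37; 38; 36; 72; 73; 74; 75; 76; 77; 78; 79; 80; 56; 54; 55; 59; 57; 58; 62; 60; 61; 65; 63; 64; 68; 66; 67; 71; 69; 70; 24; 25; 26; 18; 19; 20; 21; 22; 23; 8; 6; 7; 2; 0; 1; 5; 3; 4; 17; 15; 16; 11; 9; 10; 14; 12; 13];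
 [:: 51; 52; 53; 45; 46; 47; 48; 49; 50; 35; 33; 34; 29; 27; 28; 32; 30; 31; 44; 42; 43; 38; 36; 37; 41; 39; 40; 77; 75; 76; 80; 78; 79; 74; 72; 73; 58; 59; 57; 61; 62; 60; 55; 56; 54; 67; 68; 66; 70; 71; 69; 64; 65; 63; 18; 19; 20; 21; 22; 23; 24; 25; 26; 2; 0; 1; 5; 3; 4; 8; 6; 7; 11; 9; 10; 14; 12; 13; 17; 15; 16];
 [:: 52; 53; 51; 46; 47; 45; 49; 50; 48; 33; 34; 35; 27; 28; 29; 30; 31; 32; 42; 43; 44; 36; 37; 38; 39; 40; 41; 75; 76; 77; 78; 79; 80; 72; 73; 74; 59; 57; 58; 62; 60; 61; 56; 54; 55; 68; 66; 67; 71; 69; 70; 65; 63; 64; 19; 20; 18; 22; 23; 21; 25; 26; 24; 0; 1; 2; 3; 4; 5; 6; 7; 8; 9; 10; 11; 12; 13; 14; 15; 16; 17];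
 [:: 53; 51; 52; 47; 45; 46; 50; 48; 49; 34; 35; 33; 28; 29; 27; 31; 32; 30; 43; 44; 42; 37; 38; 36; 40; 41; 39; 76; 77; 75; 79; 80; 78; 73; 74; 72; 57; 58; 59; 60; 61; 62; 54; 55; 56; 66; 67; 68; 69; 70; 71; 63; 64; 65; 20; 18; 19; 23; 21; 22; 26; 24; 25; 1; 2; 0; 4; 5; 3; 7; 8; 6; 10; 11; 9; 13; 14; 12; 16; 17; 15];
 [:: 54; 55; 56; 57; 58; 59; 60; 61; 62; 63; 64; 65; 66; 67; 68; 69; 70; 71; 72; 73; 74; 75; 76; 77; 78; 79; 80; 0; 1; 2; 3; 4; 5; 6; 7; 8; 9; 10; 11; 12; 13; 14; 15; 16; 17; 18; 19; 20; 21; 22; 23; 24; 25; 26; 27; 28; 29; 30; 31; 32; 33; 34; 35; 36; 37; 38; 39; 40; 41; 42; 43; 44; 45; 46; 47; 48; 49; 50; 51; 52; 53];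
 [:: 55; 56; 54; 58; 59; 57; 61; 62; 60; 64; 65; 63; 67; 68; 66; 70; 71; 69; 73; 74; 72; 76; 77; 75; 79; 80; 78; 1; 2; 0; 4; 5; 3; 7; 8; 6; 10; 11; 9; 13; 14; 12; 16; 17; 15; 19; 20; 18; 22; 23; 21; 25; 26; 24; 28; 29; 27; 31; 32; 30; 34; 35; 33; 37; 38; 36; 40; 41; 39; 43; 44; 42; 46; 47; 45; 49; 50; 48; 52; 53; 51];
 [:: 56; 54; 55; 59; 57; 58; 62; 60; 61; 65; 63; 64; 68; 66; 67; 71; 69; 70; 74; 72; 73; 77; 75; 76; 80; 78; 79; 2; 0; 1; 5; 3; 4; 8; 6; 7; 11; 9; 10; 14; 12; 13; 17; 15; 16; 20; 18; 19; 23; 21; 22; 26; 24; 25; 29; 27; 28; 32; 30; 31; 35; 33; 34; 38; 36; 37; 41; 39; 40; 44; 42; 43; 47; 45; 46; 50; 48; 49; 53; 51; 52];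
 [:: 57; 58; 59; 60; 61; 62; 54; 55; 56; 66; 67; 68; 69; 70; 71; 63; 64; 65; 75; 76; 77; 78; 79; 80; 72; 73; 74; 4; 5; 3; 7; 8; 6; 1; 2; 0; 13; 14; 12; 16; 17; 15; 10; 11; 9; 22; 23; 21; 25; 26; 24; 19; 20; 18; 32; 30; 31; 35; 33; 34; 29; 27; 28; 41; 39; 40; 44; 42; 43; 38; 36; 37; 50; 48; 49; 53; 51; 52; 47; 45; 46];
 [:: 58; 59; 57; 61; 62; 60; 55; 56; 54; 67; 68; 66; 70; 71; 69; 64; 65; 63; 76; 77; 75; 79; 80; 78; 73; 74; 72; 5; 3; 4; 8; 6; 7; 2; 0; 1; 14; 12; 13; 17; 15; 16; 11; 9; 10; 23; 21; 22; 26; 24; 25; 20; 18; 19; 30; 31; 32; 33; 34; 35; 27; 28; 29; 39; 40; 41; 42; 43; 44; 36; 37; 38; 48; 49; 50; 51; 52; 53; 45; 46; 47];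
 [:: 59; 57; 58; 62; 60; 61; 56; 54; 55; 68; 66; 67; 71; 69; 70; 65; 63; 64; 77; 75; 76; 80; 78; 79; 74; 72; 73; 3; 4; 5; 6; 7; 8; 0; 1; 2; 12; 13; 14; 15; 16; 17; 9; 10; 11; 21; 22; 23; 24; 25; 26; 18; 19; 20; 31; 32; 30; 34; 35; 33; 28; 29; 27; 40; 41; 39; 43; 44; 42; 37; 38; 36; 49; 50; 48; 52; 53; 51; 46; 47; 45];
 [:: 60; 61; 62; 54; 55; 56; 57; 58; 59; 69; 70; 71; 63; 64; 65; 66; 67; 68; 78; 79; 80; 72; 73; 74; 75; 76; 77; 8; 6; 7; 2; 0; 1; 5; 3; 4; 17; 15; 16; 11; 9; 10; 14; 12; 13; 26; 24; 25; 20; 18; 19; 23; 21; 22; 34; 35; 33; 28; 29; 27; 31; 32; 30; 43; 44; 42; 37; 38; 36; 40; 41; 39; 52; 53; 51; 46; 47; 45; 49; 50; 48];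
 [:: 61; 62; 60; 55; 56; 54; 58; 59; 57; 70; 71; 69; 64; 65; 63; 67; 68; 66; 79; 80; 78; 73; 74; 72; 76; 77; 75; 6; 7; 8; 0; 1; 2; 3; 4; 5; 15; 16; 17; 9; 10; 11; 12; 13; 14; 24; 25; 26; 18; 19; 20; 21; 22; 23; 35; 33; 34; 29; 27; 28; 32; 30; 31; 44; 42; 43; 38; 36; 37; 41; 39; 40; 53; 51; 52; 47; 45; 46; 50; 48; 49];
 [:: 62; 60; 61; 56; 54; 55; 59; 57; 58; 71; 69; 70; 65; 63; 64; 68; 66; 67; 80; 78; 79; 74; 72; 73; 77; 75; 76; 7; 8; 6; 1; 2; 0; 4; 5; 3; 16; 17; 15; 10; 11; 9; 13; 14; 12; 25; 26; 24; 19; 20; 18; 22; 23; 21; 33; 34; 35; 27; 28; 29; 30; 31; 32; 42; 43; 44; 36; 37; 38; 39; 40; 41; 51; 52; 53; 45; 46; 47; 48; 49; 50];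
 [:: 63; 64; 65; 66; 67; 68; 69; 70; 71; 72; 73; 74; 75; 76; 77; 78; 79; 80; 56; 54; 55; 59; 57; 58; 62; 60; 61; 12; 13; 14; 15; 16; 17; 9; 10; 11; 21; 22; 23; 24; 25; 26; 18; 19; 20; 5; 3; 4; 8; 6; 7; 2; 0; 1; 43; 44; 42; 37; 38; 36; 40; 41; 39; 52; 53; 51; 46; 47; 45; 49; 50; 48; 33; 34; 35; 27; 28; 29; 30; 31; 32];
 [:: 64; 65; 63; 67; 68; 66; 70; 71; 69; 73; 74; 72; 76; 77; 75; 79; 80; 78; 54; 55; 56; 57; 58; 59; 60; 61; 62; 13; 14; 12; 16; 17; 15; 10; 11; 9; 22; 23; 21; 25; 26; 24; 19; 20; 18; 3; 4; 5; 6; 7; 8; 0; 1; 2; 44; 42; 43; 38; 36; 37; 41; 39; 40; 53; 51; 52; 47; 45; 46; 50; 48; 49; 34; 35; 33; 28; 29; 27; 31; 32; 30];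
 [:: 65; 63; 64; 68; 66; 67; 71; 69; 70; 74; 72; 73; 77; 75; 76; 80; 78; 79; 55; 56; 54; 58; 59; 57; 61; 62; 60; 14; 12; 13; 17; 15; 16; 11; 9; 10; 23; 21; 22; 26; 24; 25; 20; 18; 19; 4; 5; 3; 7; 8; 6; 1; 2; 0; 42; 43; 44; 36; 37; 38; 39; 40; 41; 51; 52; 53; 45; 46; 47; 48; 49; 50; 35; 33; 34; 29; 27; 28; 32; 30; 31];
 [:: 66; 67; 68; 69; 70; 71; 63; 64; 65; 75; 76; 77; 78; 79; 80; 72; 73; 74; 59; 57; 58; 62; 60; 61; 56; 54; 55; 16; 17; 15; 10; 11; 9; 13; 14; 12; 25; 26; 24; 19; 20; 18; 22; 23; 21; 6; 7; 8; 0; 1; 2; 3; 4; 5; 36; 37; 38; 39; 40; 41; 42; 43; 44; 45; 46; 47; 48; 49; 50; 51; 52; 53; 29; 27; 28; 32; 30; 31; 35; 33; 34];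
 [:: 67; 68; 66; 70; 71; 69; 64; 65; 63; 76; 77; 75; 79; 80; 78; 73; 74; 72; 57; 58; 59; 60; 61; 62; 54; 55; 56; 17; 15; 16; 11; 9; 10; 14; 12; 13; 26; 24; 25; 20; 18; 19; 23; 21; 22; 7; 8; 6; 1; 2; 0; 4; 5; 3; 37; 38; 36; 40; 41; 39; 43; 44; 42; 46; 47; 45; 49; 50; 48; 52; 53; 51; 27; 28; 29; 30; 31; 32; 33; 34; 35];
 [:: 68; 66; 67; 71; 69; 70; 65; 63; 64; 77; 75; 76; 80; 78; 79; 74; 72; 73; 58; 59; 57; 61; 62; 60; 55; 56; 54; 15; 16; 17; 9; 10; 11; 12; 13; 14; 24; 25; 26; 18; 19; 20; 21; 22; 23; 8; 6; 7; 2; 0; 1; 5; 3; 4; 38; 36; 37; 41; 39; 40; 44; 42; 43; 47; 45; 46; 50; 48; 49; 53; 51; 52; 28; 29; 27; 31; 32; 30; 34; 35; 33];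
 [:: 69; 70; 71; 63; 64; 65; 66; 67; 68; 78; 79; 80; 72; 73; 74; 75; 76; 77; 62; 60; 61; 56; 54; 55; 59; 57; 58; 11; 9; 10; 14; 12; 13; 17; 15; 16; 20; 18; 19; 23; 21; 22; 26; 24; 25; 1; 2; 0; 4; 5; 3; 7; 8; 6; 41; 39; 40; 44; 42; 43; 38; 36; 37; 50; 48; 49; 53; 51; 52; 47; 45; 46; 31; 32; 30; 34; 35; 33; 28; 29; 27];
 [:: 70; 71; 69; 64; 65; 63; 67; 68; 66; 79; 80; 78; 73; 74; 72; 76; 77; 75; 60; 61; 62; 54; 55; 56; 57; 58; 59; 9; 10; 11; 12; 13; 14; 15; 16; 17; 18; 19; 20; 21; 22; 23; 24; 25; 26; 2; 0; 1; 5; 3; 4; 8; 6; 7; 39; 40; 41; 42; 43; 44; 36; 37; 38; 48; 49; 50; 51; 52; 53; 45; 46; 47; 32; 30; 31; 35; 33; 34; 29; 27; 28];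
 [:: 71; 69; 70; 65; 63; 64; 68; 66; 67; 80; 78; 79; 74; 72; 73; 77; 75; 76; 61; 62; 60; 55; 56; 54; 58; 59; 57; 10; 11; 9; 13; 14; 12; 16; 17; 15; 19; 20; 18; 22; 23; 21; 25; 26; 24; 0; 1; 2; 3; 4; 5; 6; 7; 8; 40; 41; 39; 43; 44; 42; 37; 38; 36; 49; 50; 48; 52; 53; 51; 46; 47; 45; 30; 31; 32; 33; 34; 35; 27; 28; 29];
 [:: 72; 73; 74; 75; 76; 77; 78; 79; 80; 56; 54; 55; 59; 57; 58; 62; 60; 61; 65; 63; 64; 68; 66; 67; 71; 69; 70; 24; 25; 26; 18; 19; 20; 21; 22; 23; 8; 6; 7; 2; 0; 1; 5; 3; 4; 17; 15; 16; 11; 9; 10; 14; 12; 13; 50; 48; 49; 53; 51; 52; 47; 45; 46; 31; 32; 30; 34; 35; 33; 28; 29; 27; 40; 41; 39; 43; 44; 42; 37; 38; 36];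
 [:: 73; 74; 72; 76; 77; 75; 79; 80; 78; 54; 55; 56; 57; 58; 59; 60; 61; 62; 63; 64; 65; 66; 67; 68; 69; 70; 71; 25; 26; 24; 19; 20; 18; 22; 23; 21; 6; 7; 8; 0; 1; 2; 3; 4; 5; 15; 16; 17; 9; 10; 11; 12; 13; 14; 48; 49; 50; 51; 52; 53; 45; 46; 47; 32; 30; 31; 35; 33; 34; 29; 27; 28; 41; 39; 40; 44; 42; 43; 38; 36; 37];
 [:: 74; 72; 73; 77; 75; 76; 80; 78; 79; 55; 56; 54; 58; 59; 57; 61; 62; 60; 64; 65; 63; 67; 68; 66; 70; 71; 69; 26; 24; 25; 20; 18; 19; 23; 21; 22; 7; 8; 6; 1; 2; 0; 4; 5; 3; 16; 17; 15; 10; 11; 9; 13; 14; 12; 49; 50; 48; 52; 53; 51; 46; 47; 45; 30; 31; 32; 33; 34; 35; 27; 28; 29; 39; 40; 41; 42; 43; 44; 36; 37; 38];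
 [:: 75; 76; 77; 78; 79; 80; 72; 73; 74; 59; 57; 58; 62; 60; 61; 56; 54; 55; 68; 66; 67; 71; 69; 70; 65; 63; 64; 19; 20; 18; 22; 23; 21; 25; 26; 24; 0; 1; 2; 3; 4; 5; 6; 7; 8; 9; 10; 11; 12; 13; 14; 15; 16; 17; 52; 53; 51; 46; 47; 45; 49; 50; 48; 33; 34; 35; 27; 28; 29; 30; 31; 32; 42; 43; 44; 36; 37; 38; 39; 40; 41];
 [:: 76; 77; 75; 79; 80; 78; 73; 74; 72; 57; 58; 59; 60; 61; 62; 54; 55; 56; 66; 67; 68; 69; 70; 71; 63; 64; 65; 20; 18; 19; 23; 21; 22; 26; 24; 25; 1; 2; 0; 4; 5; 3; 7; 8; 6; 10; 11; 9; 13; 14; 12; 16; 17; 15; 53; 51; 52; 47; 45; 46; 50; 48; 49; 34; 35; 33; 28; 29; 27; 31; 32; 30; 43; 44; 42; 37; 38; 36; 40; 41; 39];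
 [:: 77; 75; 76; 80; 78; 79; 74; 72; 73; 58; 59; 57; 61; 62; 60; 55; 56; 54; 67; 68; 66; 70; 71; 69; 64; 65; 63; 18; 19; 20; 21; 22; 23; 24; 25; 26; 2; 0; 1; 5; 3; 4; 8; 6; 7; 11; 9; 10; 14; 12; 13; 17; 15; 16; 51; 52; 53; 45; 46; 47; 48; 49; 50; 35; 33; 34; 29; 27; 28; 32; 30; 31; 44; 42; 43; 38; 36; 37; 41; 39; 40];
 [:: 78; 79; 80; 72; 73; 74; 75; 76; 77; 62; 60; 61; 56; 54; 55; 59; 57; 58; 71; 69; 70; 65; 63; 64; 68; 66; 67; 23; 21; 22; 26; 24; 25; 20; 18; 19; 4; 5; 3; 7; 8; 6; 1; 2; 0; 13; 14; 12; 16; 17; 15; 10; 11; 9; 45; 46; 47; 48; 49; 50; 51; 52; 53; 29; 27; 28; 32; 30; 31; 35; 33; 34; 38; 36; 37; 41; 39; 40; 44; 42; 43];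
 [:: 79; 80; 78; 73; 74; 72; 76; 77; 75; 60; 61; 62; 54; 55; 56; 57; 58; 59; 69; 70; 71; 63; 64; 65; 66; 67; 68; 21; 22; 23; 24; 25; 26; 18; 19; 20; 5; 3; 4; 8; 6; 7; 2; 0; 1; 14; 12; 13; 17; 15; 16; 11; 9; 10; 46; 47; 45; 49; 50; 48; 52; 53; 51; 27; 28; 29; 30; 31; 32; 33; 34; 35; 36; 37; 38; 39; 40; 41; 42; 43; 44];
 [:: 80; 78; 79; 74; 72; 73; 77; 75; 76; 61; 62; 60; 55; 56; 54; 58; 59; 57; 70; 71; 69; 64; 65; 63; 67; 68; 66; 22; 23; 21; 25; 26; 24; 19; 20; 18; 3; 4; 5; 6; 7; 8; 0; 1; 2; 12; 13; 14; 15; 16; 17; 9; 10; 11; 47; 45; 46; 50; 48; 49; 53; 51; 52; 28; 29; 27; 31; 32; 30; 34; 35; 33; 37; 38; 36; 40; 41; 39; 43; 44; 42]].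
Definition Ct (p q : nat) : nat := nth 0 (nth [::] Ctab p) q.
Definition mQ (p q : nat) : nat := nth 0 (nth [::] mQtab p) q.


Lemma mod3_lt n : mod3 n < 3.
Proof.
rewrite /mod3; elim/ltn_ind: n => [[|[|[|n]]]] // IH /=.
by have := IH n (ltnW (ltnW (ltnSn _))); case: (dm3 n).
Qed.

Lemma dm3E n : n = div3 n * 3 + mod3 n.
Proof.
rewrite /div3 /mod3; elim/ltn_ind: n => [[|[|[|n]]]] // IH /=.
have := IH n (ltnW (ltnW (ltnSn _))); case: (dm3 n) => q r /= ->; lia.
Qed.

Lemma div3E n : div3 n = n %/ 3.
Proof. have := dm3E n; have := mod3_lt n; lia. Qed.
Lemma mod3E n : mod3 n = n %% 3.
Proof. have := dm3E n; have := mod3_lt n; lia. Qed.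

Definition normd (t : tup) : bool := let: (a, b, c, d, e) := t in [&& a < 3, b < 3, c < 3, d < 3 & e < 3].
Definition pr (t : tup) := let: (a, b, c, d, e) := t in (a, b, c, d).
Definition enc4 (t : nat * nat * nat * nat) := let: (a, b, c, d) := t in a * 27 + b * 9 + c * 3 + d.

Lemma normd_norm k t : normd (norm k t).
Proof. by case: t => [[[[a b] c] d] e]; rewrite /= !mod3_lt. Qed.

Lemma normd_iter (s : tup -> tup) n t : (forall t, normd (s t)) -> normd t -> normd (iter n s t).
Proof. by move=> H ht; case: n => //= n; apply: H. Qed.

Lemma normd_s1 k t : normd (s1 k t). Proof. by case: t => [[[[a b] c] d] e]; apply: normd_norm. Qed.
Lemma normd_s2 k t : normd (s2 k t). Proof. by case: t => [[[[a b] c] d] e]; apply: normd_norm. Qed.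
Lemma normd_s3 k t : normd (s3 k t). Proof. by case: t => [[[[a b] c] d] e]; apply: normd_norm. Qed.
Lemma normd_s4 k t : normd (s4 k t). Proof. by case: t => [[[[a b] c] d] e]; apply: normd_norm. Qed.
Lemma normd_s5 k t : normd (s5 k t). Proof. by case: t => [[[[a b] c] d] e]; apply: normd_norm. Qed.

Lemma normd_mG k t u : normd t -> normd (mG k t u).
Proof.
move=> ht; case: u => [[[[a b] c] d] e] /=.
apply: normd_iter; first exact: normd_s5.
apply: normd_iter; first exact: normd_s4.
apply: normd_iter; first exact: normd_s3.
apply: normd_iter; first exact: normd_s2.
apply: normd_iter; first exact: normd_s1.
done.
Qed.

Lemma normd_dec i : i < 243 -> normd (dec i).
Proof. by move=> hi; rewrite /= !mod3_lt !div3E /=; lia. Qed.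

Lemma enc_lt t : normd t -> enc t < 243.
Proof. case: t => [[[[a b] c] d] e] /= /and5P[]; lia. Qed.

Lemma decK t : normd t -> dec (enc t) = t.
Proof.
case: t => [[[[a b] c] d] e] /= /and5P[ha hb hc hd he].
rewrite /dec !div3E !mod3E; congr (_, _, _, _, _); lia.
Qed.
Lemma div3_enc t : normd t -> div3 (enc t) = enc4 (pr t).
Proof. case: t => [[[[a b] c] d] e] /= /and5P[ha hb hc hd he]; rewrite div3E; lia. Qed.

Lemma pr_norm k k' t t' : pr t = pr t' -> pr (norm k t) = pr (norm k' t').
Proof. by case: t => [[[[a b] c] d] e]; case: t' => [[[[a' b'] c'] d'] e'] [-> -> -> ->]. Qed.

Lemma pr_s1 k k' t t' : pr t = pr t' -> pr (s1 k t) = pr (s1 k' t').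
Proof.
case: t => [[[[a b] c] d] e]; case: t' => [[[[a' b'] c'] d'] e'] [-> -> -> ->].
by apply: pr_norm.
Qed.
Lemma pr_s2 k k' t t' : pr t = pr t' -> pr (s2 k t) = pr (s2 k' t').
Proof.
case: t => [[[[a b] c] d] e]; case: t' => [[[[a' b'] c'] d'] e'] [-> -> -> ->].
by apply: pr_norm.
Qed.
Lemma pr_s3 k k' t t' : pr t = pr t' -> pr (s3 k t) = pr (s3 k' t').
Proof.
case: t => [[[[a b] c] d] e]; case: t' => [[[[a' b'] c'] d'] e'] [-> -> -> ->].
by apply: pr_norm.
Qed.
Lemma pr_s4 k k' t t' : pr t = pr t' -> pr (s4 k t) = pr (s4 k' t').
Proof.
case: t => [[[[a b] c] d] e]; case: t' => [[[[a' b'] c'] d'] e'] [-> -> -> ->].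
by apply: pr_norm.
Qed.

Lemma pr_iter (s s' : tup -> tup) n t t' : (forall t t', pr t = pr t' -> pr (s t) = pr (s' t')) ->
  pr t = pr t' -> pr (iter n s t) = pr (iter n s' t').
Proof. by move=> H; elim: n => //= n IH /IH; apply: H. Qed.

Lemma pr_s5 k t : normd t -> pr (s5 k t) = pr t.
Proof.
case: t => [[[[a b] c] d] e] /= /and5P[ha hb hc hd he].
by rewrite !mod3E !div3E; congr (_, _, _, _); lia.
Qed.

Lemma pr_iter5 k n t : normd t -> pr (iter n (s5 k) t) = pr t.
Proof.
move=> ht; elim: n => //= n IH.
by rewrite pr_s5 ?IH //; apply: normd_iter ht; apply: normd_s5.
Qed.

Lemma pr_mG k t t' u u' : normd t -> normd t' -> pr t = pr t' -> pr u = pr u' ->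
  pr (mG k t u) = pr (mG 0 t' u').
Proof.
case: u => [[[[a b] c] d] e]; case: u' => [[[[a' b'] c'] d'] e'] ht ht' E [-> -> -> ->] /=.
rewrite !pr_iter5; last 2 first.
- do 4 (apply: normd_iter; [move=> ?; first [exact: normd_s4 | exact: normd_s3 | exact: normd_s2 | exact: normd_s1] |]).
  exact: ht'.
- do 4 (apply: normd_iter; [move=> ?; first [exact: normd_s4 | exact: normd_s3 | exact: normd_s2 | exact: normd_s1] |]).
  exact: ht.
apply: pr_iter; first exact: pr_s4.
apply: pr_iter; first exact: pr_s3.
apply: pr_iter; first exact: pr_s2.
apply: pr_iter; first exact: pr_s1.
exact: E.
Qed.

Lemma pr_dec3 i : i < 243 -> pr (dec i) = pr (dec (div3 i * 3)).
Proof. move=> hi; rewrite /= !div3E !mod3E; congr (_, _, _, _); lia. Qed.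

Lemma div3_mC k i j : i < 243 -> j < 243 ->
  div3 (mC k i j) = div3 (mC 0 (div3 i * 3) (div3 j * 3)).
Proof.
move=> hi hj.
have hi' : div3 i * 3 < 243 by rewrite div3E; lia.
have hj' : div3 j * 3 < 243 by rewrite div3E; lia.
rewrite /mC !div3_enc; try by apply: normd_mG; apply: normd_dec.
by congr enc4; apply: pr_mG; try apply: normd_dec; try apply: pr_dec3.
Qed.

Definition chkQ := all (fun p => all (fun q => mQ p q == div3 (mC 0 (p * 3) (q * 3))) (iota 0 81)) (iota 0 81).
Definition chkC k1 := all (fun p => all (fun q =>
  (mQ p q == mQ q p) ==> ((mC k1 (p * 3) (q * 3) == mC k1 (q * 3) (p * 3)) ==> (Ct p q == 0))) (iota 0 81)) (iota 0 81).
Definition chk3g := all (fun p => all (fun q => all (fun r =>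
   (Ct q r + Ct p (mQ q r)) %% 9 == (Ct (mQ p q) r + Ct p q) %% 9) [:: 27; 9; 3; 1; 0]) (iota 0 81)) (iota 0 81).

Definition ta4 (p : nat) := p %/ 27.
Definition tb4 (p : nat) := p %/ 9 %% 3.
Definition phi' (n : nat) : 'Z_3 * 'Z_3 := (((ta4 (div3 n))%:R)%R, ((tb4 (div3 n))%:R)%R).
Definition chkab :=
  all (fun p => all (fun q =>
    (ta4 (mQ p q) == (ta4 p + ta4 q) %% 3) && (tb4 (mQ p q) == (tb4 p + tb4 q) %% 3)) (iota 0 81)) (iota 0 81)
  && all (fun i => ((phi' i == (0, 0)%R) == (ta4 (div3 i) == 0) && (tb4 (div3 i) == 0))) (iota 0 243)
  && all (fun u => all (fun v => phi' (u * 81 + v * 27) == ((u%:R)%R, (v%:R)%R)) (iota 0 3)) (iota 0 3).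

Lemma chkQ_ok : chkQ. Proof. vm_compute. reflexivity. Qed.
Lemma chkC0 : chkC 0. Proof. vm_compute. reflexivity. Qed.
Lemma chkC1 : chkC 1. Proof. vm_compute. reflexivity. Qed.
Lemma chkC2 : chkC 2. Proof. vm_compute. reflexivity. Qed.
Lemma chk3g_ok : chk3g. Proof. vm_compute. reflexivity. Qed.
Lemma chkab_ok : chkab. Proof. vm_compute. reflexivity. Qed.

Lemma nocob0 (F : nat -> rat) :
  (forall i j m v, i < 243 -> j < 243 -> mC 0 i j = m -> Ct (div3 i) (div3 j) = v ->
    ((v%:R / 9 - (F j - F m + F i)) \is a Num.int)%R) -> False.
Proof.
move=> H.
have h0 := H 0 6 6 0 isT isT ltac:(by vm_compute) ltac:(by vm_compute).
have h1 := H 6 162 169 0 isT isT ltac:(by vm_compute) ltac:(by vm_compute).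
have h2 := H 169 3 163 6 isT isT ltac:(by vm_compute) ltac:(by vm_compute).
have h3 := H 163 81 1 0 isT isT ltac:(by vm_compute) ltac:(by vm_compute).
have h4 := H 1 57 58 0 isT isT ltac:(by vm_compute) ltac:(by vm_compute).
have h5 := H 58 19 77 0 isT isT ltac:(by vm_compute) ltac:(by vm_compute).
have h6 := H 77 27 19 0 isT isT ltac:(by vm_compute) ltac:(by vm_compute).
have h7 := H 19 9 0 0 isT isT ltac:(by vm_compute) ltac:(by vm_compute).
have h8 := H 3 6 0 0 isT isT ltac:(by vm_compute) ltac:(by vm_compute).
have h9 := H 0 0 0 0 isT isT ltac:(by vm_compute) ltac:(by vm_compute).
have h10 := H 81 162 0 0 isT isT ltac:(by vm_compute) ltac:(by vm_compute).
have h11 := H 0 0 0 0 isT isT ltac:(by vm_compute) ltac:(by vm_compute).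
have h12 := H 9 19 0 0 isT isT ltac:(by vm_compute) ltac:(by vm_compute).
have h13 := H 0 0 0 0 isT isT ltac:(by vm_compute) ltac:(by vm_compute).
have h14 := H 27 57 0 0 isT isT ltac:(by vm_compute) ltac:(by vm_compute).
have h15 := H 0 0 0 0 isT isT ltac:(by vm_compute) ltac:(by vm_compute).
have x := (rpredB (rpredB (rpredB (rpredB (rpredB (rpredB (rpredB (rpredB (rpredD (rpredD (rpredD (rpredD (rpredD (rpredD (rpredD h0 h1) h2) h3) h4) h5) h6) h7) h8) h9) h10) h11) h12) h13) h14) h15).
match type of x with is_true (?e \in _) => have E : e = ((6%:R / 9)%R : rat) by ring end.
by move: x; rewrite E; vm_compute.
Qed.

Lemma nocob1 (F : nat -> rat) :
  (forall i j m v, i < 243 -> j < 243 -> mC 1 i j = m -> Ct (div3 i) (div3 j) = v ->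
    ((v%:R / 9 - (F j - F m + F i)) \is a Num.int)%R) -> False.
Proof.
move=> H.
have h0 := H 0 6 6 0 isT isT ltac:(by vm_compute) ltac:(by vm_compute).
have h1 := H 6 164 168 0 isT isT ltac:(by vm_compute) ltac:(by vm_compute).
have h2 := H 168 3 162 6 isT isT ltac:(by vm_compute) ltac:(by vm_compute).
have h3 := H 162 81 1 0 isT isT ltac:(by vm_compute) ltac:(by vm_compute).
have h4 := H 1 57 58 0 isT isT ltac:(by vm_compute) ltac:(by vm_compute).
have h5 := H 58 19 77 0 isT isT ltac:(by vm_compute) ltac:(by vm_compute).
have h6 := H 77 27 19 0 isT isT ltac:(by vm_compute) ltac:(by vm_compute).
have h7 := H 19 9 0 0 isT isT ltac:(by vm_compute) ltac:(by vm_compute).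
have h8 := H 3 6 0 0 isT isT ltac:(by vm_compute) ltac:(by vm_compute).
have h9 := H 0 0 0 0 isT isT ltac:(by vm_compute) ltac:(by vm_compute).
have h10 := H 81 164 0 0 isT isT ltac:(by vm_compute) ltac:(by vm_compute).
have h11 := H 0 0 0 0 isT isT ltac:(by vm_compute) ltac:(by vm_compute).
have h12 := H 9 19 0 0 isT isT ltac:(by vm_compute) ltac:(by vm_compute).
have h13 := H 0 0 0 0 isT isT ltac:(by vm_compute) ltac:(by vm_compute).
have h14 := H 27 57 0 0 isT isT ltac:(by vm_compute) ltac:(by vm_compute).
have h15 := H 0 0 0 0 isT isT ltac:(by vm_compute) ltac:(by vm_compute).
have x := (rpredB (rpredB (rpredB (rpredB (rpredB (rpredB (rpredB (rpredB (rpredD (rpredD (rpredD (rpredD (rpredD (rpredD (rpredD h0 h1) h2) h3) h4) h5) h6) h7) h8) h9) h10) h11) h12) h13) h14) h15).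
match type of x with is_true (?e \in _) => have E : e = ((6%:R / 9)%R : rat) by ring end.
by move: x; rewrite E; vm_compute.
Qed.

Lemma nocob2 (F : nat -> rat) :
  (forall i j m v, i < 243 -> j < 243 -> mC 2 i j = m -> Ct (div3 i) (div3 j) = v ->
    ((v%:R / 9 - (F j - F m + F i)) \is a Num.int)%R) -> False.
Proof.
move=> H.
have h0 := H 0 6 6 0 isT isT ltac:(by vm_compute) ltac:(by vm_compute).
have h1 := H 6 163 170 0 isT isT ltac:(by vm_compute) ltac:(by vm_compute).
have h2 := H 170 3 164 6 isT isT ltac:(by vm_compute) ltac:(by vm_compute).
have h3 := H 164 81 1 0 isT isT ltac:(by vm_compute) ltac:(by vm_compute).
have h4 := H 1 57 58 0 isT isT ltac:(by vm_compute) ltac:(by vm_compute).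
have h5 := H 58 19 77 0 isT isT ltac:(by vm_compute) ltac:(by vm_compute).
have h6 := H 77 27 19 0 isT isT ltac:(by vm_compute) ltac:(by vm_compute).
have h7 := H 19 9 0 0 isT isT ltac:(by vm_compute) ltac:(by vm_compute).
have h8 := H 3 6 0 0 isT isT ltac:(by vm_compute) ltac:(by vm_compute).
have h9 := H 0 0 0 0 isT isT ltac:(by vm_compute) ltac:(by vm_compute).
have h10 := H 81 163 0 0 isT isT ltac:(by vm_compute) ltac:(by vm_compute).
have h11 := H 0 0 0 0 isT isT ltac:(by vm_compute) ltac:(by vm_compute).
have h12 := H 9 19 0 0 isT isT ltac:(by vm_compute) ltac:(by vm_compute).
have h13 := H 0 0 0 0 isT isT ltac:(by vm_compute) ltac:(by vm_compute).
have h14 := H 27 57 0 0 isT isT ltac:(by vm_compute) ltac:(by vm_compute).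
have h15 := H 0 0 0 0 isT isT ltac:(by vm_compute) ltac:(by vm_compute).
have x := (rpredB (rpredB (rpredB (rpredB (rpredB (rpredB (rpredB (rpredB (rpredD (rpredD (rpredD (rpredD (rpredD (rpredD (rpredD h0 h1) h2) h3) h4) h5) h6) h7) h8) h9) h10) h11) h12) h13) h14) h15).
match type of x with is_true (?e \in _) => have E : e = ((6%:R / 9)%R : rat) by ring end.
by move: x; rewrite E; vm_compute.
Qed.


Local Open Scope group_scope.



Lemma int9 (A1 A2 B1 B2 : nat) : ((A1 + A2) %% 9 = (B1 + B2) %% 9)%N ->
  ((A1%:R / 9 - B1%:R / 9 + A2%:R / 9 - B2%:R / 9 : rat) \is a Num.int)%R.
Proof.
move=> h.
have eA : (A1%:R + A2%:R : rat)%R = (((A1 + A2) %/ 9)%:R * 9 + ((A1 + A2) %% 9)%:R)%R.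
  by rewrite -natrD {1}(divn_eq (A1 + A2) 9) natrD natrM.
have eB : (B1%:R + B2%:R : rat)%R = (((B1 + B2) %/ 9)%:R * 9 + ((A1 + A2) %% 9)%:R)%R.
  by rewrite h -natrD {1}(divn_eq (B1 + B2) 9) natrD natrM.
have -> : (A1%:R / 9 - B1%:R / 9 + A2%:R / 9 - B2%:R / 9 : rat)%R =
   (((A1%:R + A2%:R) - (B1%:R + B2%:R)) / 9)%R by field.
rewrite eA eB.
have -> : ((((A1 + A2) %/ 9)%:R * 9 + ((A1 + A2) %% 9)%:R -
    (((B1 + B2) %/ 9)%:R * 9 + ((A1 + A2) %% 9)%:R)) / 9 : rat)%R
  = (((A1 + A2) %/ 9)%:R - ((B1 + B2) %/ 9)%:R)%R by field.
by rewrite rpredB // natr_int.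
Qed.

Lemma chk3gP p q r : p < 81 -> q < 81 -> r \in [:: 27; 9; 3; 1; 0]%N ->
  (Ct q r + Ct p (mQ q r)) %% 9 = (Ct (mQ p q) r + Ct p q) %% 9.
Proof.
move=> hp hq hr; apply/eqP.
have mi k : k < 81 -> k \in iota 0 81 by rewrite mem_iota add0n.
by move: chk3g_ok => /allP /(_ _ (mi _ hp)) /allP /(_ _ (mi _ hq)) /allP /(_ _ hr).
Qed.

Lemma chkQP p q : p < 81 -> q < 81 -> mQ p q = div3 (mC 0 (p * 3) (q * 3)).
Proof.
move=> hp hq; apply/eqP.
have mi k : k < 81 -> k \in iota 0 81 by rewrite mem_iota add0n.
by move: chkQ_ok => /allP /(_ _ (mi _ hp)) /allP /(_ _ (mi _ hq)).
Qed.

Section Grp.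
Variables (gT : finGroupType) (G : {group gT}) (f1 f2 f3 f4 f5 : gT) (k1 : nat).
Hypotheses (Hf1 : f1 \in G) (Hf2 : f2 \in G) (Hf3 : f3 \in G) (Hf4 : f4 \in G).
Hypothesis HZ : f5 \in 'Z(G).
Hypotheses (C21 : [~ f2, f1] = f3) (C31 : [~ f3, f1] = f4) (C41 : [~ f4, f1] = f5)
  (C32 : [~ f3, f2] = f5) (C42 : [~ f4, f2] = 1) (C43 : [~ f4, f3] = 1).
Hypotheses (P1 : f1 ^+ 3 = f5 ^+ k1) (P2 : f2 ^+ 3 = f4 ^+ 2) (P3 : f3 ^+ 3 = f5 ^+ 2)
  (P4 : f4 ^+ 3 = 1) (P5 : f5 ^+ 3 = 1).

Lemma c5 x : x \in G -> commute f5 x.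
Proof. by case/centerP: HZ => _ H /H. Qed.
Lemma c5n x n m : x \in G -> commute (f5 ^+ n) (x ^+ m).
Proof. by move=> Hx; apply: commuteX2; apply: c5. Qed.
Lemma c42 : commute f4 f2. Proof. by apply/commgP; rewrite C42. Qed.
Lemma c43 : commute f4 f3. Proof. by apply/commgP; rewrite C43. Qed.

Definition N (t : tup) : gT := let: (a, b, c, d, e) := t in f1 ^+ a * f2 ^+ b * f3 ^+ c * f4 ^+ d * f5 ^+ e.

Lemma powred (x : gT) n : x ^+ n = x ^+ mod3 n * (x ^+ 3) ^+ div3 n.
Proof. by rewrite -expgM mulnC -expgD addnC -dm3E. Qed.

Lemma pow3 (x : gT) n : x ^+ 3 = 1 -> x ^+ n = x ^+ mod3 n.
Proof. by move=> h; rewrite powred h expg1n mulg1. Qed.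

Lemma mov (x y z : gT) : commute y z -> x * y * z = x * z * y.
Proof. by move=> h; rewrite -mulgA h mulgA. Qed.

Lemma Nnorm t : N t = N (norm k1 t).
Proof.
case: t => [[[[a b] c] d] e] /=.
rewrite [f1 ^+ a]powred [f2 ^+ b]powred [f3 ^+ c]powred P1 P2 P3 -!expgM.
rewrite -(pow3 _ P4) -(pow3 _ P5).
move: (2 * div3 b)%N (k1 * div3 a)%N (2 * div3 c)%N => u v w.
rewrite !expgD !mulgA.
have h5 x n m : x \in G -> commute (f5 ^+ n) (x ^+ m) := @c5n x n m.
rewrite (mov _ (h5 _ v (mod3 b) Hf2)).
rewrite (mov _ (commuteX2 v u (c5 Hf4))).
rewrite (mov _ (h5 _ v (mod3 c) Hf3)).
rewrite (mov _ (commuteX2 u (mod3 c) c43)).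
rewrite (mov _ (commuteX2 w d (c5 Hf4))).
rewrite (mov _ (commuteX2 v d (c5 Hf4))).
rewrite (mov _ (commuteX2 u d (commute_refl f4))).
rewrite (mov _ (commuteX2 w e (commute_refl f5))).
rewrite (mov _ (commuteX2 v e (commute_refl f5))).
done.
Qed.

Definition r1 (t : tup) : tup := let: (a, b, c, d, e) := t in (a.+1, b, b + c, c + d, e + d + 'C(b, 2))%N.
Definition r2 (t : tup) : tup := let: (a, b, c, d, e) := t in (a, b.+1, c, d, e + c)%N.
Definition r3 (t : tup) : tup := let: (a, b, c, d, e) := t in (a, b, c.+1, d, e).
Definition r4 (t : tup) : tup := let: (a, b, c, d, e) := t in (a, b, c, d.+1, e).
Definition r5 (t : tup) : tup := let: (a, b, c, d, e) := t in (a, b, c, d, e.+1).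

Lemma N5 t : N t * f5 = N (r5 t).
Proof. by case: t => [[[[a b] c] d] e] /=; rewrite -mulgA -expgSr. Qed.
Lemma N4 t : N t * f4 = N (r4 t).
Proof.
case: t => [[[[a b] c] d] e] /=.
by rewrite (mov _ (commuteX2 e 1 (c5 Hf4))) -(mulgA _ (f4 ^+ d)) -expgSr.
Qed.
Lemma N3 t : N t * f3 = N (r3 t).
Proof.
case: t => [[[[a b] c] d] e] /=.
rewrite (mov _ (commuteX2 e 1 (c5 Hf3))) (mov _ (commuteX2 d 1 c43)).
by rewrite -(mulgA _ (f3 ^+ c)) -expgSr.
Qed.

Lemma conj21 : f2 ^ f1 = f2 * f3. Proof. by rewrite conjg_mulR C21. Qed.
Lemma conj31 : f3 ^ f1 = f3 * f4. Proof. by rewrite conjg_mulR C31. Qed.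
Lemma conj41 : f4 ^ f1 = f4 * f5. Proof. by rewrite conjg_mulR C41. Qed.
Lemma conj32 : f3 ^ f2 = f3 * f5. Proof. by rewrite conjg_mulR C32. Qed.
Lemma conj5 x : x \in G -> f5 ^ x = f5.
Proof. by move=> Hx; rewrite conjg_mulR; move/commgP/eqP: (c5 Hx) => ->; rewrite mulg1. Qed.

Lemma N2 t : N t * f2 = N (r2 t).
Proof.
case: t => [[[[a b] c] d] e] /=.
rewrite (mov _ (commuteX2 e 1 (c5 Hf2))) (mov _ (commuteX2 d 1 c42)).
rewrite -(mulgA _ (f3 ^+ c)) (conjgC (f3 ^+ c) f2) conjXg conj32 expgMn; last first.
  exact: commute_sym (c5 Hf3).
rewrite !mulgA -(mulgA _ (f2 ^+ b)) -expgSr.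
rewrite (mov _ (commuteX2 c d (c5 Hf4))).
by rewrite -(mulgA _ (f5 ^+ c)) -expgD addnC.
Qed.

Lemma N1 t : N t * f1 = N (r1 t).
Proof.
case: t => [[[[a b] c] d] e] /=.
have -> : f1 ^+ a * f2 ^+ b * f3 ^+ c * f4 ^+ d * f5 ^+ e * f1 =
   f1 ^+ a.+1 * ((f2 ^+ b) ^ f1 * (f3 ^+ c) ^ f1 * (f4 ^+ d) ^ f1 * (f5 ^+ e) ^ f1).
  rewrite -!conjMg.
  have E1 (X : gT) : f1 ^+ a * X * f1 = f1 ^+ a.+1 * X ^ f1.
    by rewrite expgSr -!mulgA -conjgC.
  by rewrite -E1 !mulgA.
rewrite !conjXg conj21 conj31 conj41 (conj5 Hf1).
rewrite expMg_Rmul; first last.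
- by rewrite C32; apply: commute_sym; apply: c5.
- by rewrite C32; apply: commute_sym; apply: c5.
rewrite C32 expgMn; last exact: commute_sym c43.
rewrite expgMn; last exact: commute_sym (c5 Hf4).
rewrite !mulgA.
set C := 'C(b, 2).
rewrite (mov _ (commuteX2 C c (c5 Hf3))) (mov _ (commuteX2 C c (c5 Hf4))).
rewrite (mov _ (commuteX2 C d (c5 Hf4))) (mov _ (commuteX2 C d (commute_refl f5))).
rewrite (mov _ (commuteX2 C e (commute_refl f5))) (mov _ (commuteX2 d e (commute_refl f5))).
rewrite -(mulgA _ (f3 ^+ b)) -expgD -(mulgA _ (f4 ^+ c)) -expgD.
by rewrite -(mulgA _ (f5 ^+ e)) -expgD -(mulgA _ (f5 ^+ (e + d))) -expgD.
Qed.

Lemma Ns1 t : N t * f1 = N (s1 k1 t). Proof. by rewrite N1 Nnorm; case: t => [[[[a b] c] d] e]. Qed.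
Lemma Ns2 t : N t * f2 = N (s2 k1 t). Proof. by rewrite N2 Nnorm; case: t => [[[[a b] c] d] e]. Qed.
Lemma Ns3 t : N t * f3 = N (s3 k1 t). Proof. by rewrite N3 Nnorm; case: t => [[[[a b] c] d] e]. Qed.
Lemma Ns4 t : N t * f4 = N (s4 k1 t). Proof. by rewrite N4 Nnorm; case: t => [[[[a b] c] d] e]. Qed.
Lemma Ns5 t : N t * f5 = N (s5 k1 t). Proof. by rewrite N5 Nnorm; case: t => [[[[a b] c] d] e]. Qed.

Lemma Niter (x : gT) (s : tup -> tup) n t : (forall t, N t * x = N (s t)) -> N t * x ^+ n = N (iter n s t).
Proof.
move=> H; elim: n => [|n IH]; first by rewrite expg0 mulg1.
by rewrite expgSr mulgA IH H.
Qed.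

Lemma Nmul t u : N t * N u = N (mG k1 t u).
Proof.
case: u => [[[[a b] c] d] e] /=.
rewrite !mulgA (Niter _ _ Ns1) (Niter _ _ Ns2) (Niter _ _ Ns3) (Niter _ _ Ns4) (Niter _ _ Ns5).
done.
Qed.

Hypothesis HG : G :=: <<[set f1; f2; f3; f4; f5]>>.
Hypothesis Hcard : #|G| = 243.
Hypothesis Hcomm : chkC k1.

Definition Nf (i : 'I_243) : gT := N (dec i).

Lemma mC_normd (i j : 'I_243) : normd (mG k1 (dec i) (dec j)).
Proof. by apply: normd_mG; apply: normd_dec. Qed.

Definition mO (i j : 'I_243) : 'I_243 := inord (mC k1 i j).

Lemma valmO i j : val (mO i j) = mC k1 i j.
Proof. by apply: inordK; apply: enc_lt; apply: mC_normd. Qed.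

Lemma NfM i j : Nf i * Nf j = Nf (mO i j).
Proof. by rewrite /Nf valmO /mC decK ?Nmul //; apply: mC_normd. Qed.

Definition Sset := [set Nf i | i in 'I_243].

Lemma gen1 : f1 = Nf (inord 81).
Proof. rewrite /Nf inordK; last by []. by rewrite /= expg1 !expg0 !mulg1. Qed.
Lemma gen2 : f2 = Nf (inord 27).
Proof. rewrite /Nf inordK; last by []. by rewrite /= expg1 !expg0 !mulg1 mul1g. Qed.
Lemma gen3 : f3 = Nf (inord 9).
Proof. rewrite /Nf inordK; last by []. by rewrite /= expg1 !expg0 !mulg1 !mul1g. Qed.
Lemma gen4 : f4 = Nf (inord 3).
Proof. rewrite /Nf inordK; last by []. by rewrite /= expg1 !expg0 !mulg1 !mul1g. Qed.
Lemma gen5 : f5 = Nf (inord 1).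
Proof. rewrite /Nf inordK; last by []. by rewrite /= expg1 !expg0 !mul1g. Qed.

Lemma GsubS : G \subset Sset.
Proof.
pose K := [set g | [forall i : 'I_243, Nf i * g \in Sset]].
have gK : group_set K.
  apply/group_setP; split.
    by rewrite inE; apply/forallP => i; rewrite mulg1; apply: imset_f.
  move=> x y; rewrite !inE => /forallP Hx /forallP Hy; apply/forallP => i.
  by case/imsetP: (Hx i) => j _ Ej; rewrite mulgA Ej Hy.
have NfK i : Nf i \in K.
  by rewrite inE; apply/forallP => j; rewrite NfM; apply: imset_f.
have sGK : G \subset Group gK.
  rewrite HG gen_subG; apply/subsetP => x.
  rewrite !inE => /orP[/orP[/orP[/orP[]|]|]|] /eqP ->.
  - by rewrite gen1; apply/forallP => j; rewrite NfM; apply: imset_f.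
  - by rewrite gen2; apply/forallP => j; rewrite NfM; apply: imset_f.
  - by rewrite gen3; apply/forallP => j; rewrite NfM; apply: imset_f.
  - by rewrite gen4; apply/forallP => j; rewrite NfM; apply: imset_f.
  - by rewrite gen5; apply/forallP => j; rewrite NfM; apply: imset_f.
apply/subsetP => x /(subsetP sGK); rewrite inE => /forallP /(_ ord0).
have -> : Nf ord0 = 1 by rewrite /Nf /= !expg0 !mulg1.
by rewrite mul1g.
Qed.

Lemma Nf_inj : injective Nf.
Proof.
have : #|Sset| == #|'I_243|.
  rewrite eqn_leq leq_imset_card card_ord -{1}Hcard.
  by apply: subset_leq_card GsubS.
by move/imset_injP => H i j; apply: H.
Qed.

Definition idx (x : gT) : 'I_243 := odflt ord0 [pick i | Nf i == x].

Lemma idxP x : x \in G -> Nf (idx x) = x.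
Proof.
move=> /(subsetP GsubS) /imsetP [i _ ->]; rewrite /idx.
by case: pickP => [j /eqP //|/(_ i)]; rewrite eqxx.
Qed.

Lemma Hf5 : f5 \in G. Proof. by case/centerP: HZ. Qed.

Lemma NfG i : Nf i \in G.
Proof.
rewrite /Nf; case: (dec i) => [[[[a b] c] d] e] /=.
by rewrite !groupM // groupX // Hf5.
Qed.

Lemma idxK i : idx (Nf i) = i.
Proof. by apply: Nf_inj; apply: idxP; apply: NfG. Qed.

Lemma idxM x y : x \in G -> y \in G -> idx (x * y) = mO (idx x) (idx y).
Proof. by move=> Hx Hy; rewrite -{1}(idxP Hx) -{1}(idxP Hy) NfM idxK. Qed.



Lemma div3_lt (i : 'I_243) : div3 i < 81.
Proof. by rewrite div3E; have := ltn_ord i; lia. Qed.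

Lemma div3mO i j : div3 (mO i j) = mQ (div3 i) (div3 j).
Proof. by rewrite valmO div3_mC // chkQP // div3_lt. Qed.



Definition cc (x y : gT) : rat := ((Ct (div3 (idx x)) (div3 (idx y)))%:R / 9)%R.

Lemma chkCP p q : p < 81 -> q < 81 ->
  (mQ p q == mQ q p) ==> ((mC k1 (p * 3) (q * 3) == mC k1 (q * 3) (p * 3)) ==> (Ct p q == 0)).
Proof.
move=> hp hq.
have mi k : k < 81 -> k \in iota 0 81 by rewrite mem_iota add0n.
by move: Hcomm => /allP /(_ _ (mi _ hp)) /allP /(_ _ (mi _ hq)).
Qed.

Lemma lt3 (i : 'I_243) : div3 i * 3 < 243.
Proof. by rewrite div3E; have := ltn_ord i; lia. Qed.

Lemma Nf_split (i : 'I_243) : Nf i = Nf (inord (div3 i * 3)) * f5 ^+ mod3 i.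
Proof.
rewrite /Nf inordK ?lt3 // /dec !div3E !mod3E.
have -> : (i %/ 3 * 3) %% 3 = 0 by lia.
have -> : (i %/ 3 * 3) %/ 3 = i %/ 3 by lia.
by rewrite /= expg0 mulg1.
Qed.

Lemma cc_comm x y : x \in G -> y \in G -> x * y = y * x -> cc x y = 0%R.
Proof.
move=> Hx Hy E; rewrite /cc.
set i := idx x; set j := idx y.
have Hij : mO i j = mO j i by rewrite -!idxM // E.
have EQ : mQ (div3 i) (div3 j) = mQ (div3 j) (div3 i) by rewrite -!div3mO Hij.
set I := (inord (div3 i * 3) : 'I_243); set J := (inord (div3 j * 3) : 'I_243).
have Ex : x = Nf I * f5 ^+ mod3 i by rewrite -Nf_split idxP.
have Ey : y = Nf J * f5 ^+ mod3 j by rewrite -Nf_split idxP.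
have E2 : Nf I * Nf J = Nf J * Nf I.
  apply: (mulIg (f5 ^+ mod3 i * f5 ^+ mod3 j)).
  have cz (n : nat) (k : 'I_243) : commute (f5 ^+ n) (Nf k).
    by apply: commute_sym; apply: commuteX; apply: commute_sym; apply: c5; apply: NfG.
  have sw (a b z1 z2 : gT) : commute z1 b -> commute z2 a -> commute z1 z2 ->
      (a * z1) * (b * z2) = a * b * (z1 * z2) /\ (b * z2) * (a * z1) = b * a * (z1 * z2).
    move=> h1 h2 h3; split; rewrite !mulgA; first by rewrite (mov _ h1).
    by rewrite (mov _ h2) -[in LHS]mulgA -h3 mulgA.
  have [L1 L2] := sw (Nf I) (Nf J) _ _ (cz (mod3 i) J) (cz (mod3 j) I)
    (commuteX2 (mod3 i) (mod3 j) (commute_refl f5)).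
  rewrite -Ex -Ey in L1 L2.
  by rewrite -L1 -L2 E.
have E3 : mC k1 (div3 i * 3) (div3 j * 3) = mC k1 (div3 j * 3) (div3 i * 3).
  have := congr1 val (Nf_inj (etrans (esym (NfM I J)) (etrans E2 (NfM J I)))).
  by rewrite !valmO !inordK ?lt3.
have := chkCP (div3_lt i) (div3_lt j); rewrite EQ eqxx E3 eqxx /=.
by move/eqP ->; rewrite mul0r.
Qed.

Definition D x y z := (cc y z - cc (x * y) z + cc x (y * z) - cc x y)%R.

Lemma D_1 x y : x \in G -> y \in G -> D x y 1 = 0%R.
Proof.
move=> Hx Hy; rewrite /D !mulg1 !(@cc_comm _ 1) ?groupM ?mulg1 ?mul1g //.
by rewrite subrr add0r subrr.
Qed.

Lemma D_step x y w s : D x y (w * s) = (D y w s - D (x * y) w s + D x (y * w) s + D x y w)%R.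
Proof. rewrite /D !mulgA; ring. Qed.

Lemma idx_gen s : s \in [set f1; f2; f3; f4; f5] -> div3 (idx s) \in [:: 27; 9; 3; 1; 0]%N.
Proof.
rewrite !inE => /orP[/orP[/orP[/orP[]|]|]|] /eqP ->.
- by rewrite gen1 idxK inordK //; vm_compute.
- by rewrite gen2 idxK inordK //; vm_compute.
- by rewrite gen3 idxK inordK //; vm_compute.
- by rewrite gen4 idxK inordK //; vm_compute.
- by rewrite gen5 idxK inordK //; vm_compute.
Qed.

Lemma D_gen x y s : x \in G -> y \in G -> s \in [set f1; f2; f3; f4; f5] -> (D x y s \is a Num.int)%R.
Proof.
move=> Hx Hy Hs.
have Hs' : s \in G by rewrite HG; apply: mem_gen.
rewrite /D /cc (idxM Hx Hy) (idxM Hy Hs') !div3mO.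
apply: int9; apply: chk3gP; try apply: div3_lt.
exact: idx_gen.
Qed.

Lemma cc_cocycle : cocycle2 G cc.
Proof.
pose W := [set w | (w \in G) && [forall x, forall y, (x \in G) ==> (y \in G) ==> (D x y w \is a Num.int)%R]].
pose K := [set g | [forall w, (w \in W) ==> (w * g \in W)]].
have gK : group_set K.
  apply/group_setP; split.
    by rewrite inE; apply/forallP => w; rewrite mulg1; apply/implyP.
  move=> g h; rewrite !inE => /forallP Hg /forallP Hh; apply/forallP => w; apply/implyP => Hw.
  by rewrite mulgA; move/implyP: (Hh (w * g)); apply; move/implyP: (Hg w); apply.
have sK : [set f1; f2; f3; f4; f5] \subset K.
  apply/subsetP => s Hs; rewrite inE; apply/forallP => w; apply/implyP.
  have Hs' : s \in G by rewrite HG; apply: mem_gen.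
  rewrite !inE => /andP[Hw /forallP HW]; rewrite groupM //=.
  apply/forallP => x; apply/forallP => y; apply/implyP => Hx; apply/implyP => Hy.
  rewrite D_step.
  have HD := HW x; move/forallP: HD => /(_ y); rewrite Hx Hy /= => HD.
  apply: rpredD; last exact: HD.
  apply: rpredD; last by apply: D_gen; rewrite ?groupM.
  by apply: rpredB; apply: D_gen; rewrite ?groupM.
have sGK : G \subset Group gK by rewrite HG gen_subG.
have W1 : 1 \in W.
  rewrite inE group1 /=; apply/forallP => x; apply/forallP => y.
  by apply/implyP => Hx; apply/implyP => Hy; rewrite D_1.
move=> x y z Hx Hy Hz.
have := subsetP sGK z Hz; rewrite inE => /forallP /(_ 1); rewrite W1 mul1g /= inE.
case/andP=> _ /forallP /(_ x) /forallP /(_ y); rewrite Hx Hy /=.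
by rewrite /eqQZ subr0.
Qed.

Hypothesis Hnocob : forall F : nat -> rat,
  (forall i j m v, i < 243 -> j < 243 -> mC k1 i j = m -> Ct (div3 i) (div3 j) = v ->
    ((v%:R / 9 - (F j - F m + F i)) \is a Num.int)%R) -> False.

Lemma cc_nocob : ~ coboundary2 G cc.
Proof.
case=> f Hf; apply: (Hnocob (F := fun n => f (Nf (inord n)))).
move=> i j m v hi hj Hm Hv.
have := Hf (Nf (inord i)) (Nf (inord j)) (NfG _) (NfG _).
rewrite /eqQZ /cc !idxK NfM /mO.
have vI : val (inord i : 'I_243) = i by exact: inordK.
have vJ : val (inord j : 'I_243) = j by exact: inordK.
by rewrite vI vJ Hv Hm.
Qed.

Lemma B0 : B0_nontrivial G.
Proof.
exists cc; split; [exact: cc_cocycle | exact: cc_nocob |].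
move=> A sAG [abA _]; exists (fun _ => 0%R) => x y Hx Hy.
have cxy : commute x y by move/centsP: abA => /(_ x Hx y Hy).
by rewrite /eqQZ cc_comm ?(subsetP sAG) // ?subr0 ?addr0.
Qed.

Definition phi (x : gT) : 'Z_3 * 'Z_3 := phi' (idx x).

Lemma chkabP1 p q : p < 81 -> q < 81 ->
  (ta4 (mQ p q) == (ta4 p + ta4 q) %% 3) && (tb4 (mQ p q) == (tb4 p + tb4 q) %% 3).
Proof.
move=> hp hq.
have mi k : k < 81 -> k \in iota 0 81 by rewrite mem_iota add0n.
move: chkab_ok; rewrite /chkab => /andP[/andP[/allP H1 _] _].
by move: (H1 _ (mi _ hp)) => /allP /(_ _ (mi _ hq)).
Qed.

Lemma chkabP2 (i : 'I_243) : (phi' i == (0, 0)%R) == (ta4 (div3 i) == 0) && (tb4 (div3 i) == 0).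
Proof.
have mi (k : 'I_243) : val k \in iota 0 243 by rewrite mem_iota add0n ltn_ord.
by move: chkab_ok; rewrite /chkab => /andP[/andP[_ /allP H2] _]; exact: (H2 _ (mi i)).
Qed.

Lemma chkabP3 (u v : 'Z_3) : phi' (u * 81 + v * 27) == ((u : nat)%:R, (v : nat)%:R)%R.
Proof.
have mi (k : 'Z_3) : val k \in iota 0 3 by rewrite mem_iota add0n ltn_ord.
by move: chkab_ok; rewrite /chkab => /andP[_ /allP H3]; move: (H3 _ (mi u)) => /allP /(_ _ (mi v)).
Qed.

Lemma Zmod (n : nat) : ((n %% 3)%:R : 'Z_3)%R = (n%:R)%R.
Proof. by rewrite !Zp_nat; apply: val_inj; rewrite /= modn_mod. Qed.

Lemma phiM : {in G &, {morph phi : x y / x * y}}.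
Proof.
move=> x y Hx Hy; rewrite /phi /phi' (idxM Hx Hy) div3mO.
case/andP: (chkabP1 (div3_lt (idx x)) (div3_lt (idx y))) => /eqP -> /eqP ->.
by rewrite !(Zmod (_ + _)) !natrD.
Qed.

Definition phim : {morphism G >-> 'Z_3 * 'Z_3} := Morphism phiM.

Lemma commZ (u v : 'Z_3 * 'Z_3) : commute u v.
Proof.
case: u v => [u1 u2] [v1 v2]; rewrite /commute.
have h (a b : 'Z_3) : (a * b)%g = (b * a)%g by exact: addrC.
by congr pair; apply: h.
Qed.

Lemma ker_phi : 'ker phim = [~: G, G].
Proof.
apply/eqP; rewrite eqEsubset; apply/andP; split; last first.
  rewrite gen_subG; apply/subsetP => z /imset2P [x y Hx Hy ->].
  apply/kerP; first by rewrite groupR.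
  by rewrite morphR //; apply/eqP/commgP; apply: commZ.
apply/subsetP => x Hk.
have Hx : x \in G := dom_ker Hk.
have := mker Hk; rewrite /= /phi.
move/eqP; rewrite (eqP (chkabP2 _)) => /andP[/eqP ha /eqP hb].
rewrite -(idxP Hx) /Nf /dec.
have hi := ltn_ord (idx x).
have -> : div3 (div3 (div3 (div3 (idx x)))) = 0.
  by move: ha; rewrite /ta4 !div3E; lia.
have -> : mod3 (div3 (div3 (div3 (idx x)))) = 0.
  by move: hb; rewrite /tb4 !div3E mod3E; lia.
rewrite /= !expg0 !mul1g.
have g3 : f3 \in [~: G, G] by rewrite -C21 mem_commg.
have g4 : f4 \in [~: G, G] by rewrite -C31 mem_commg.
have g5 : f5 \in [~: G, G] by rewrite -C41 mem_commg.
by rewrite !groupM // groupX.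
Qed.

Lemma im_phi : phim @* G = [set: 'Z_3 * 'Z_3].
Proof.
apply/eqP; rewrite eqEsubset subsetT /=; apply/subsetP => -[u v] _.
rewrite morphimEdom.
have lt : (u * 81 + v * 27 < 243)%N.
  have hu : (u < 3)%N := ltn_ord u; have hv : (v < 3)%N := ltn_ord v; lia.
apply/imsetP; exists (Nf (inord (u * 81 + v * 27))); first exact: NfG.
rewrite /= /phi idxK inordK // (eqP (chkabP3 u v)).
by rewrite !natr_Zp.
Qed.

Lemma abel : (G / [~: G, G]) \isog [set: 'Z_3 * 'Z_3].
Proof. by rewrite -ker_phi -im_phi; apply: first_isog. Qed.

End Grp.

End Aux.
Import Aux.

Unset Implicit Arguments.
Local Open Scope group_scope.

Lemma inv3 {gT : finGroupType} {x : gT} : x ^+ 3 = 1 -> x^-1 = x ^+ 2.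
Proof. by move=> h; apply/eqP; rewrite eq_invg_mul -expgS h. Qed.

Theorem mainTheorem5 (gT : finGroupType) (G : {group gT}) (f1 f2 f3 f4 f5 : gT) :
  #|G| = (3 ^ 5)%N ->
  G :=: <<[set f1; f2; f3; f4; f5]>> ->
  f5 \in 'Z(G) ->
  [~ f2, f1] = f3 ->
  [~ f3, f1] = f4 ->
  [~ f4, f1] = f5 ->
  [~ f3, f2] = f5 ->
  [~ f4, f2] = 1 ->
  [~ f4, f3] = 1 ->
  (* case (a) *)
  [/\ f1 ^+ 3 = 1, f4 ^+ 3 = 1, f5 ^+ 3 = 1, f2 ^+ 3 = f4^-1 & f3 ^+ 3 = f5^-1]
  (* case (b) *)
  \/ [/\ f4 ^+ 3 = 1, f5 ^+ 3 = 1, f1 ^+ 3 = f5, f2 ^+ 3 = f4^-1 & f3 ^+ 3 = f5^-1]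
  (* case (c) *)
  \/ [/\ f4 ^+ 3 = 1, f5 ^+ 3 = 1, f1 ^+ 3 = f5^-1, f3 ^+ 3 = f5^-1 & f2 ^+ 3 = f4^-1] ->
  B0_nontrivial G /\
  ([/\ f1 ^+ 3 = 1, f4 ^+ 3 = 1, f5 ^+ 3 = 1, f2 ^+ 3 = f4^-1 & f3 ^+ 3 = f5^-1] ->
   (G / [~: G, G]) \isog [set: 'Z_3 * 'Z_3]).
Proof.
move=> Hcard HG HZ C21 C31 C41 C32 C42 C43 Hcases.
have Hcard' : #|G| = 243 by rewrite Hcard.
have mG x : x \in [set f1; f2; f3; f4; f5] -> x \in G.
  by move=> Hx; rewrite HG; apply: mem_gen.
have Hf1 : f1 \in G by apply: mG; rewrite !inE eqxx.
have Hf2 : f2 \in G by apply: mG; rewrite !inE eqxx !orbT.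
have Hf3 : f3 \in G by apply: mG; rewrite !inE eqxx !orbT.
have Hf4 : f4 \in G by apply: mG; rewrite !inE eqxx !orbT.
split.
  case: Hcases => [[P1 P4 P5 P2 P3]|[[P4 P5 P1 P2 P3]|[P4 P5 P1 P3 P2]]].
  - rewrite (inv3 P4) in P2; rewrite (inv3 P5) in P3.
    have P1' : f1 ^+ 3 = f5 ^+ 0 by rewrite P1 expg0.
    exact: (B0 Hf1 Hf2 Hf3 Hf4 HZ C21 C31 C41 C32 C42 C43 P1' P2 P3 P4 P5 HG Hcard' chkC0 (@nocob0)).
  - rewrite (inv3 P4) in P2; rewrite (inv3 P5) in P3.
    have P1' : f1 ^+ 3 = f5 ^+ 1 by rewrite P1 expg1.
    exact: (B0 Hf1 Hf2 Hf3 Hf4 HZ C21 C31 C41 C32 C42 C43 P1' P2 P3 P4 P5 HG Hcard' chkC1 (@nocob1)).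
  - rewrite (inv3 P4) in P2; rewrite (inv3 P5) in P3 P1.
    exact: (B0 Hf1 Hf2 Hf3 Hf4 HZ C21 C31 C41 C32 C42 C43 P1 P2 P3 P4 P5 HG Hcard' chkC2 (@nocob2)).
case=> P1 P4 P5 P2 P3.
rewrite (inv3 P4) in P2; rewrite (inv3 P5) in P3.
have P1' : f1 ^+ 3 = f5 ^+ 0 by rewrite P1 expg0.
exact: (abel Hf1 Hf2 Hf3 Hf4 HZ C21 C31 C41 C32 C42 C43 P1' P2 P3 P4 P5 HG Hcard' chkC0).
Qed.
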